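(* Given any integers $W\ge6$, $L\ge2$ and any $\theta_i\in\{0,1\}$ for $i=0,1,\dots,W^2L^2-1$, there exists a ReLU network $\phi:\mathbb{R}\to\mathbb{R}$, $\phi\in\mathcal{NN}(8W+4,4L)$, such that $\phi(i)=\theta_i$ for $i=0,1,\dots,W^2L^2-1$ and $\mathrm{Lip}\,\phi\le2\cdot2^{L^2}+L^2$.
   Context: $\sigma(x)=\max(x,0)$. $\mathcal{NN}(W,L)$: functions $\phi(x)=T_L(\sigma(T_{L-1}(\cdots\sigma(T_0(x))\cdots)))$ with affine maps $T_l$, ReLU componentwise, all hidden layer sizes $\le W$ and depth $\le L$. $\mathrm{Lip}\,\phi$ is the Lipschitz constant of $\phi$. *)

(* Defs.v *)
From HB Require Import structures.
From mathcomp Require Import all_boot all_order all_algebra.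
From mathcomp Require Import reals.
Set Implicit Arguments. Unset Strict Implicit. Unset Printing Implicit Defensive.
Import Order.TTheory GRing.Theory Num.Theory.
Local Open Scope ring_scope.

Definition relu {R : realType} (x : R) : R := Num.max x 0.

(* A ReLU network with input dimension m and scalar output.
   [Hidden A b rest] : affine map x |-> A x + b into R^n, then ReLU, then rest.
   [Last A b]        : final affine map T_L : R^m -> R. *)
Inductive relu_net (R : realType) : nat -> Type :=
| Last : forall m, 'M[R]_(1, m) -> 'cV[R]_1 -> relu_net R m
| Hidden : forall m n, 'M[R]_(n, m) -> 'cV[R]_n -> relu_net R n -> relu_net R m.

Fixpoint net_eval (R : realType) m (N : relu_net R m) : 'cV[R]_m -> R :=
  match N with
  | Last _ A b => fun x => (A *m x + b) 0 0
  | Hidden _ _ A b rest => fun x => net_eval rest (map_mx relu (A *m x + b))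
  end.

(* number of hidden layers (= L in phi = T_L o sigma o ... o sigma o T_0) *)
Fixpoint net_depth (R : realType) m (N : relu_net R m) : nat :=
  match N with
  | Last _ _ _ => 0
  | Hidden _ _ _ _ rest => (net_depth rest).+1
  end.

Fixpoint net_width (R : realType) m (N : relu_net R m) : nat :=
  match N with
  | Last _ _ _ => 0
  | Hidden _ n _ _ rest => maxn n (net_width rest)
  end.

Definition realize (R : realType) (N : relu_net R 1) : R -> R :=
  fun x => net_eval N (const_mx x).

Definition in_NN (R : realType) (W L : nat) (phi : R -> R) : Prop :=
  exists N : relu_net R 1,
    [/\ (net_width N <= W)%N, (net_depth N <= L)%N & forall x, phi x = realize N x].

Definition lip_le (R : realType) (phi : R -> R) (C : R) : Prop :=
  forall x y : R, `|phi x - phi y| <= C * `|x - y|.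

(* Main.v *)
Require Import Defs.
From HB Require Import structures.
From mathcomp Require Import all_boot all_order all_algebra.
From mathcomp Require Import reals.
From mathcomp Require Import ring lra zify.
From Stdlib Require Import ClassicalEpsilon.
Set Implicit Arguments. Unset Strict Implicit. Unset Printing Implicit Defensive.
Import Order.TTheory GRing.Theory Num.Theory.
Local Open Scope ring_scope.

Module P1.

Section Frame.
Variable R : realType.
Local Notation fn := (R -> R).
Definition nthf (F : seq fn) j : fn := nth (fun _ => 0) F j.

Definition Span (F : seq fn) (h : fn) := exists (a : nat -> R) (c : R),
  forall x, h x = \sum_(j < size F) a j * nthf F j x + c.

Definition Neurons (F G : seq fn) := exists (A : nat -> nat -> R) (bv : nat -> R),
  forall i, (i < size G)%N -> forall x,
    nthf G i x = relu (\sum_(j < size F) A i j * nthf F j x + bv i).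

Fixpoint Cont (w : nat) (F : seq fn) (d : nat) (phi : fn) : Prop :=
  match d with
  | 0 => Span F phi
  | d'.+1 => exists G, (size G <= w)%N /\ Neurons F G /\ Cont w G d' phi
  end.

Lemma Cont_net w d : forall F phi, Cont w F d phi ->
  exists N : relu_net R (size F), [/\ (net_width N <= w)%N, (net_depth N <= d)%N &
     forall x, phi x = net_eval N (\col_(i < size F) nthf F i x)].
Proof.
elim: d => [|d IH] F phi /=.
  move=> [a [c Hc]].
  exists (Last (\row_(j < size F) a j) (const_mx c)); split => // x /=.
  rewrite Hc !mxE; congr (_ + _).
  by apply: eq_bigr => j _; rewrite !mxE.
move=> [G [HG [[A [bv HA]] HC]]].
have [N' [H1 H2 H3]] := IH _ _ HC.
exists (Hidden (\matrix_(i < size G, j < size F) A i j) (\col_(i < size G) bv i) N').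
split => /=; first by rewrite geq_max HG.
  by [].
move=> x; rewrite H3; congr (net_eval N' _).
apply/matrixP => i j; rewrite !mxE (ord1 j) HA //.
congr (relu (_ + _)).
by apply: eq_bigr => k _; rewrite !mxE.
Qed.

Lemma Cont_in_NN w d phi : Cont w [:: id] d phi -> in_NN w d phi.
Proof.
move=> /Cont_net [N [H1 H2 H3]]; exists N; split => // x.
rewrite H3 /realize; congr (net_eval N _).
by apply/matrixP => i j; rewrite !mxE (ord1 i).
Qed.

Lemma Span_ext F h h' : (forall x, h x = h' x) -> Span F h -> Span F h'.
Proof. by move=> E [a [c H]]; exists a, c => x; rewrite -E. Qed.

Lemma Span_const F k : Span F (fun _ => k).
Proof. by exists (fun _ => 0), k => x; rewrite big1 ?add0r // => j _; rewrite mul0r. Qed.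

Lemma Span_nth F j : (j < size F)%N -> Span F (nthf F j).
Proof.
move=> Hj; exists (fun i => (i == j)%:R), 0 => x.
rewrite addr0 (bigD1 (Ordinal Hj)) //= eqxx mul1r big1 ?addr0 // => i Hi.
suff -> : (nat_of_ord i == j) = false by rewrite mul0r.
by apply/negbTE; apply: contra Hi => /eqP Hij; apply/eqP/val_inj.
Qed.

Lemma Span_add F h1 h2 : Span F h1 -> Span F h2 -> Span F (fun x => h1 x + h2 x).
Proof.
move=> [a1 [c1 H1]] [a2 [c2 H2]]; exists (fun j => a1 j + a2 j), (c1 + c2) => x.
rewrite H1 H2; under [X in _ = X + _]eq_bigr => j _ do rewrite mulrDl.
by rewrite big_split /=; ring.
Qed.

Lemma Span_scale F k h : Span F h -> Span F (fun x => k * h x).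
Proof.
move=> [a [c H]]; exists (fun j => k * a j), (k * c) => x.
rewrite H mulrDr mulr_sumr; congr (_ + _); apply: eq_bigr => j _; ring.
Qed.

Lemma Span_opp F h : Span F h -> Span F (fun x => - h x).
Proof. by move=> /(Span_scale (-1)); apply: Span_ext => x; ring. Qed.

Lemma Span_sub F h1 h2 : Span F h1 -> Span F h2 -> Span F (fun x => h1 x - h2 x).
Proof. by move=> H1 /Span_opp H2; apply: Span_add. Qed.

Lemma Span_sum F n (h : nat -> fn) : (forall m, (m < n)%N -> Span F (h m)) ->
  Span F (fun x => \sum_(m < n) h m x).
Proof.
elim: n => [|n IH] H.
  by apply: (Span_ext (h := fun _ => 0)) => [x|]; [rewrite big_ord0|apply: Span_const].
apply: (Span_ext (h := fun x => \sum_(m < n) h m x + h n x)).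
  by move=> x; rewrite big_ord_recr.
by apply: Span_add; [apply: IH => m Hm; apply: H; apply: ltnW|apply: H].
Qed.

Lemma nthf_catl F1 F2 j : (j < size F1)%N -> nthf (F1 ++ F2) j = nthf F1 j.
Proof. by move=> H; rewrite /nthf nth_cat H. Qed.

Lemma nthf_catr F1 F2 j : nthf (F1 ++ F2) (size F1 + j) = nthf F2 j.
Proof. by rewrite /nthf nth_cat ltnNge leq_addr /= addKn. Qed.

Lemma Span_catl F1 F2 h : Span F1 h -> Span (F1 ++ F2) h.
Proof.
move=> [a [c H]].
exists (fun j => if (j < size F1)%N then a j else 0), c => x.
rewrite H size_cat big_split_ord /=.
rewrite [X in _ = _ + X + _]big1 ?addr0; last by move=> j _; rewrite /= ltnNge leq_addr /= mul0r.
congr (_ + _); apply: eq_bigr => j _; by rewrite /= ltn_ord nthf_catl.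
Qed.

Lemma Span_catr F1 F2 h : Span F2 h -> Span (F1 ++ F2) h.
Proof.
move=> [a [c H]].
exists (fun j => if (j < size F1)%N then 0 else a (j - size F1)%N), c => x.
rewrite H size_cat big_split_ord /=.
rewrite [X in _ = X + _ + _]big1 ?add0r; last by move=> j _; rewrite /= ltn_ord mul0r.
congr (_ + _); apply: eq_bigr => j _; rewrite /= ltnNge leq_addr /= addKn.
by rewrite nthf_catr.
Qed.

Lemma nthf_map_iota (f : nat -> fn) n m : (m < n)%N -> nthf (map f (iota 0 n)) m = f m.
Proof. by move=> H; rewrite /nthf (nth_map 0) ?size_iota // nth_iota. Qed.

Lemma Span_map (f : nat -> fn) n m : (m < n)%N -> Span (map f (iota 0 n)) (f m).
Proof.
move=> H; rewrite -(nthf_map_iota f H); apply: Span_nth.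
by rewrite size_map size_iota.
Qed.

Lemma Neurons_nil F : Neurons F [::].
Proof. by exists (fun _ _ => 0), (fun _ => 0). Qed.

Lemma Neurons_cat F G1 G2 : Neurons F G1 -> Neurons F G2 -> Neurons F (G1 ++ G2).
Proof.
move=> [A1 [b1 H1]] [A2 [b2 H2]].
exists (fun i => if (i < size G1)%N then A1 i else A2 (i - size G1)%N),
       (fun i => if (i < size G1)%N then b1 i else b2 (i - size G1)%N).
move=> i; rewrite size_cat => Hi x.
case: (ltnP i (size G1)) => Hi1.
  by rewrite nthf_catl // H1.
have -> : i = (size G1 + (i - size G1))%N by rewrite subnKC.
rewrite nthf_catr H2; last by rewrite -(ltn_add2l (size G1)) subnKC.
by rewrite addKn.
Qed.

Lemma Neurons_map F (h : nat -> fn) n : (forall m, (m < n)%N -> Span F (h m)) ->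
  Neurons F (map (fun m x => relu (h m x)) (iota 0 n)).
Proof.
move=> H.
have ex : forall m, exists a : (nat -> R) * R, (m < n)%N ->
     forall x, h m x = \sum_(j < size F) a.1 j * nthf F j x + a.2.
  move=> m; case: (ltnP m n) => Hm.
    by have [a [c Hac]] := H m Hm; exists (a, c).
  by exists (fun _ => 0, 0).
pose a := fun m => proj1_sig (constructive_indefinite_description _ (ex m)).
have Ha : forall m, (m < n)%N -> forall x, h m x = \sum_(j < size F) (a m).1 j * nthf F j x + (a m).2.
  by move=> m; exact: (proj2_sig (constructive_indefinite_description _ (ex m))).
exists (fun m => (a m).1), (fun m => (a m).2) => i.
rewrite size_map size_iota => Hi x.
by rewrite (nthf_map_iota (fun m x => relu (h m x)) Hi) Ha.
Qed.

Lemma Neurons_one F h : Span F h -> Neurons F [:: fun x => relu (h x)].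
Proof.
move=> H; have := @Neurons_map F (fun _ => h) 1 (fun _ _ => H).
by [].
Qed.

Definition pass (h : fn) : seq fn := [:: fun x => relu (h x); fun x => relu (- h x)].

Lemma Neurons_pass F h : Span F h -> Neurons F (pass h).
Proof.
move=> H; rewrite /pass -[[:: _; _]]/([:: _] ++ [:: _]).
by apply: Neurons_cat; apply: Neurons_one => //; apply: Span_opp.
Qed.

Lemma relu_id (v : R) : 0 <= v -> relu v = v.
Proof. by move=> H; rewrite /relu max_l. Qed.

Lemma relu_0 (v : R) : v <= 0 -> relu v = 0.
Proof. by move=> H; rewrite /relu max_r. Qed.

Lemma relu_pass (v : R) : relu v - relu (- v) = v.
Proof.
case: (lerP 0 v) => H.
  by rewrite relu_id // relu_0 ?subr0 // oppr_le0.
rewrite relu_0 ?(ltW H) // relu_id ?oppr_ge0 ?(ltW H) //; ring.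
Qed.

Lemma Span_pass h : Span (pass h) h.
Proof.
apply: (Span_ext (h := fun x => nthf (pass h) 0 x - nthf (pass h) 1 x)).
  by move=> x; rewrite /nthf /= relu_pass.
by apply: Span_sub; apply: Span_nth.
Qed.

End Frame.

End P1.
Import P1.

Module P2.

Section Basic.
Variable R : realType.
Implicit Types (a b v x y : R).

Lemma relu_ge0 v : 0 <= relu v.
Proof. by rewrite /relu le_max lexx orbT. Qed.

Lemma relu_ge v : v <= relu v.
Proof. by rewrite /relu le_max lexx. Qed.

Lemma relu_cases v : (0 <= v /\ relu v = v) \/ (v <= 0 /\ relu v = 0).
Proof.
case: (lerP 0 v) => H; first by left; rewrite relu_id.
by right; rewrite relu_0 ?(ltW H).
Qed.

Lemma relu_lip a b : `|relu a - relu b| <= `|a - b|.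
Proof.
case: (relu_cases a) => [[Ha ->]|[Ha ->]]; case: (relu_cases b) => [[Hb ->]|[Hb ->]] //.
- by rewrite subr0 !ger0_norm //; lra.
- by rewrite sub0r normrN (ger0_norm Hb) ler0_norm; lra.
- by rewrite subrr normr0.
Qed.

Definition rampf v : R := relu v - relu (v - 1).

Lemma rampf_0 v : v <= 0 -> rampf v = 0.
Proof. by move=> H; rewrite /rampf !relu_0 ?subrr //; lra. Qed.

Lemma rampf_1 v : 1 <= v -> rampf v = 1.
Proof. by move=> H; rewrite /rampf !relu_id; lra. Qed.

Lemma rampf_id v : 0 <= v -> v <= 1 -> rampf v = v.
Proof. by move=> H1 H2; rewrite /rampf relu_id // relu_0 ?subr0 //; lra. Qed.

Lemma rampf_cases v : (v <= 0 /\ rampf v = 0) \/ (0 <= v /\ v <= 1 /\ rampf v = v)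
   \/ (1 <= v /\ rampf v = 1).
Proof.
case: (lerP v 0) => H0; first by left; rewrite rampf_0.
case: (lerP v 1) => H1; first by right; left; rewrite rampf_id // ltW.
by right; right; rewrite rampf_1 // ltW.
Qed.

Lemma rampf_lip a b : `|rampf a - rampf b| <= `|a - b|.
Proof.
case: (rampf_cases a) => [[Ha ->]|[[Ha [Ha' ->]]|[Ha ->]]];
case: (rampf_cases b) => [[Hb ->]|[[Hb [Hb' ->]]|[Hb ->]]];
rewrite ?subrr ?normr0 ?normr_ge0 //;
repeat match goal with
| |- context [`|?t|] =>
  let H := fresh in
  (have H : 0 <= t by lra); rewrite (ger0_norm H)
| |- context [`|?t|] =>
  let H := fresh in
  (have H : t <= 0 by lra); rewrite (ler0_norm H)
end; lra.
Qed.

Lemma rampf_ge0 v : 0 <= rampf v.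
Proof. by case: (rampf_cases v) => [[_ ->]|[[? [? ->]]|[_ ->]]] //; lra. Qed.

Lemma rampf_le1 v : rampf v <= 1.
Proof. by case: (rampf_cases v) => [[_ ->]|[[? [? ->]]|[_ ->]]] //; lra. Qed.

Lemma rampf_mono a b : a <= b -> rampf a <= rampf b.
Proof.
move=> H.
case: (rampf_cases a) => [[Ha ->]|[[Ha [Ha' ->]]|[Ha ->]]];
case: (rampf_cases b) => [[Hb ->]|[[Hb [Hb' ->]]|[Hb ->]]]; lra.
Qed.

Lemma rampf_int (k : int) : rampf k%:~R = if (0 < k)%R then 1 else 0.
Proof.
case: (lerP k 0) => H.
  have H' : (k%:~R : R) <= (0%:~R : R) by rewrite ler_int.
  rewrite rampf_0 //; by case: ifP => //; lia.
have H' : (1%:~R : R) <= (k%:~R : R) by rewrite ler_int; lia.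
by rewrite rampf_1 // H.
Qed.

Lemma lip_mono (h : R -> R) C C' : C <= C' -> lip_le h C -> lip_le h C'.
Proof.
move=> HC H x y; apply: le_trans (H x y) _.
by apply: ler_wpM2r => //; apply: normr_ge0.
Qed.

Lemma lip_ext (h h' : R -> R) C : (forall x, h x = h' x) -> lip_le h C -> lip_le h' C.
Proof. by move=> E H x y; rewrite -!E. Qed.

Lemma lip_const k : lip_le (fun _ : R => k) 0.
Proof. by move=> x y; rewrite subrr normr0 mul0r. Qed.

Lemma lip_id : lip_le (fun x : R => x) 1.
Proof. by move=> x y; rewrite mul1r. Qed.

Lemma lip_add (h1 h2 : R -> R) C1 C2 : lip_le h1 C1 -> lip_le h2 C2 ->
  lip_le (fun x => h1 x + h2 x) (C1 + C2).
Proof.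
move=> H1 H2 x y.
have -> : h1 x + h2 x - (h1 y + h2 y) = (h1 x - h1 y) + (h2 x - h2 y) by ring.
apply: le_trans (ler_normD _ _) _; rewrite mulrDl.
exact: lerD.
Qed.

Lemma lip_scale (h : R -> R) k C : lip_le h C -> lip_le (fun x => k * h x) (`|k| * C).
Proof.
move=> H x y; rewrite -mulrBr normrM -mulrA.
by apply: ler_wpM2l => //; apply: normr_ge0.
Qed.

Lemma lip_opp (h : R -> R) C : lip_le h C -> lip_le (fun x => - h x) C.
Proof. by move=> H x y; rewrite -opprD normrN. Qed.

Lemma lip_sub (h1 h2 : R -> R) C1 C2 : lip_le h1 C1 -> lip_le h2 C2 ->
  lip_le (fun x => h1 x - h2 x) (C1 + C2).
Proof. by move=> H1 H2; apply: lip_add => //; apply: lip_opp. Qed.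

Lemma lip_relu (h : R -> R) C : lip_le h C -> lip_le (fun x => relu (h x)) C.
Proof. by move=> H x y; apply: le_trans (relu_lip _ _) (H x y). Qed.

Lemma lip_rampf (h : R -> R) C : lip_le h C -> lip_le (fun x => rampf (h x)) C.
Proof. by move=> H x y; apply: le_trans (rampf_lip _ _) (H x y). Qed.

Definition PA (h : R -> R) := forall (n : int) (s : R), 0 <= s -> s <= 1 ->
  h (n%:~R + s) = h n%:~R + s * (h (n + 1)%:~R - h n%:~R).

Lemma PA_ext h h' : (forall x, h x = h' x) -> PA h -> PA h'.
Proof. by move=> E H n s H1 H2; rewrite -!E H. Qed.

Lemma PA_id : PA (fun x => x).
Proof. by move=> n s _ _; rewrite intrD; ring. Qed.

Lemma PA_const k : PA (fun _ => k).
Proof. by move=> n s _ _; ring. Qed.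

Lemma PA_add h1 h2 : PA h1 -> PA h2 -> PA (fun x => h1 x + h2 x).
Proof. by move=> H1 H2 n s S1 S2; rewrite H1 // H2 //; ring. Qed.

Lemma PA_scale k h : PA h -> PA (fun x => k * h x).
Proof. by move=> H n s S1 S2; rewrite H //; ring. Qed.

Lemma PA_opp h : PA h -> PA (fun x => - h x).
Proof. by move=> H n s S1 S2; rewrite H //; ring. Qed.

Lemma PA_sub h1 h2 : PA h1 -> PA h2 -> PA (fun x => h1 x - h2 x).
Proof. by move=> H1 H2; apply: PA_add => //; apply: PA_opp. Qed.

Lemma PA_sum n (h : nat -> R -> R) : (forall m, (m < n)%N -> PA (h m)) ->
  PA (fun x => \sum_(m < n) h m x).
Proof.
elim: n => [|n IH] H.
  by apply: (PA_ext (h := fun _ => 0)) => [x|]; [rewrite big_ord0|apply: PA_const].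
apply: (PA_ext (h := fun x => \sum_(m < n) h m x + h n x)).
  by move=> x; rewrite big_ord_recr.
by apply: PA_add; [apply: IH => m Hm; apply: H; apply: ltnW|apply: H].
Qed.

Definition signok (a b : R) := (0 <= a /\ 0 <= b) \/ (a <= 0 /\ b <= 0).

Lemma PA_relu h : PA h -> (forall n : int, signok (h n%:~R) (h (n + 1)%:~R)) ->
  PA (fun x => relu (h x)).
Proof.
move=> H Hs n s S1 S2; rewrite H //.
case: (Hs n) => [[Ha Hb]|[Ha Hb]].
  rewrite !relu_id //.
  have -> : h n%:~R + s * (h (n + 1)%:~R - h n%:~R) =
            (1 - s) * h n%:~R + s * h (n + 1)%:~R by ring.
  by apply: addr_ge0; apply: mulr_ge0 => //; lra.
rewrite !relu_0 //; first ring.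
have -> : h n%:~R + s * (h (n + 1)%:~R - h n%:~R) =
          (1 - s) * h n%:~R + s * h (n + 1)%:~R by ring.
have P1 : (1 - s) * h n%:~R <= 0 by apply: mulr_ge0_le0 => //; lra.
have P2 : s * h (n + 1)%:~R <= 0 by apply: mulr_ge0_le0 => //; lra.
lra.
Qed.

Definition walk (h : R -> R) := forall n : int, exists k k' : int,
  [/\ h n%:~R = k%:~R, h (n + 1)%:~R = k'%:~R & (k' <= k + 1 /\ k <= k' + 1)%R].

Lemma walk_signok h : walk h -> forall n : int, signok (h n%:~R) (h (n + 1)%:~R).
Proof.
move=> W n; have [k [k' [-> -> [H1 H2]]]] := W n.
case: (lerP 0 k) => Hk.
  case: (lerP 0 k') => Hk'.
    by left; rewrite !ler0z.
  have Ek : k = 0 by lia.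
  by right; rewrite Ek !lerz0; split => //; lia.
right; rewrite !lerz0; lia.
Qed.

Lemma walk_shift h (c : int) : walk h -> walk (fun x => h x + c%:~R).
Proof.
move=> W n; have [k [k' [E1 E2 [H1 H2]]]] := W n.
exists (k + c), (k' + c); rewrite E1 E2 !intrD; split => //; lia.
Qed.

Lemma PA_relu_walk h : PA h -> walk h -> PA (fun x => relu (h x)).
Proof. by move=> H W; apply: PA_relu => //; apply: walk_signok. Qed.

Definition LU (h : R -> R) C := forall (n : int) s s', 0 <= s -> s <= 1 -> 0 <= s' -> s' <= 1 ->
  `|h (n%:~R + s) - h (n%:~R + s')| <= C * `|s - s'|.

Lemma LU_lip h C : 0 <= C -> LU h C -> lip_le h C.
Proof.
move=> HC H.
suff key : forall k : nat, forall x y, x <= y ->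
    (Num.floor y - Num.floor x)%R = k%:Z -> `|h x - h y| <= C * (y - x).
  move=> x y; case: (lerP x y) => Hxy.
    have Hk : (0 <= Num.floor y - Num.floor x)%R.
      by rewrite subr_ge0; apply: le_floor.
    have [k Ek] : exists k : nat, (Num.floor y - Num.floor x)%R = k%:Z.
      by exists `|(Num.floor y - Num.floor x)%R|%N; rewrite gez0_abs.
    exact: key Ek.
  have Hk : (0 <= Num.floor x - Num.floor y)%R.
    by rewrite subr_ge0; apply: le_floor; apply: ltW.
  have [k Ek] : exists k : nat, (Num.floor x - Num.floor y)%R = k%:Z.
    by exists `|(Num.floor x - Num.floor y)%R|%N; rewrite gez0_abs.
  rewrite distrC; by apply: key Ek; apply: ltW.
elim=> [|k IH] x y Hxy Ek.
  have Ef : Num.floor y = Num.floor x by lia.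
  have Hx := floor_itv x; have Hy := floor_itv y.
  move: Hx Hy; rewrite Ef intrD => /andP [Hx1 Hx2] /andP [Hy1 Hy2].
  have := H (Num.floor x) (x - (Num.floor x)%:~R) (y - (Num.floor x)%:~R).
  have E : forall z : R, (Num.floor x)%:~R + (z - (Num.floor x)%:~R) = z by move=> z; ring.
  rewrite !E => Hl.
  have {}Hl := Hl ltac:(lra) ltac:(lra) ltac:(lra) ltac:(lra).
  apply: (le_trans Hl).
  have -> : x - (Num.floor x)%:~R - (y - (Num.floor x)%:~R) = x - y by ring.
  by rewrite distrC ger0_norm ?subr_ge0.
set n := Num.floor x.
have Hx := floor_itv x; rewrite -/n intrD in Hx; case/andP: Hx => Hx1 Hx2.
have Hz : ((n + 1)%:~R : R) <= y.
  apply: le_trans (floor_le y); rewrite ler_int /n. move: Ek; set fy := Num.floor y; set fx := Num.floor x; lia.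
have Fz : Num.floor ((n + 1)%:~R : R) = (n + 1)%R by rewrite intrKfloor.
have := IH ((n + 1)%:~R) y Hz; rewrite Fz => /(_ _).
have -> : (Num.floor y - (n + 1))%R = k%:Z by rewrite /n; lia.
move=> /(_ erefl) H2.
have H1 := H n (x - n%:~R) 1.
have E1 : n%:~R + (x - n%:~R) = x by ring.
have E2 : n%:~R + 1 = (n + 1)%:~R :> R by rewrite intrD.
rewrite E1 E2 in H1.
have {}H1 := H1 (ltac:(lra)) (ltac:(lra)) ler01 (lexx _).
rewrite (distrC _ 1) (ger0_norm (_ : 0 <= 1 - (x - n%:~R))) in H1; last by lra.
have -> : h x - h y = (h x - h (n + 1)%:~R) + (h (n + 1)%:~R - h y) by ring.
apply: le_trans (ler_normD _ _) _.
have -> : C * (y - x) = C * (1 - (x - n%:~R)) + C * (y - (n + 1)%:~R).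
  by rewrite intrD; ring.
by apply: lerD.
Qed.

Lemma PA_LU h C : 0 <= C -> PA h -> (forall n : int, `|h (n + 1)%:~R - h n%:~R| <= C) -> LU h C.
Proof.
move=> HC H Hd n s s' S1 S2 S3 S4; rewrite !H //.
have -> : h n%:~R + s * (h (n + 1)%:~R - h n%:~R) -
          (h n%:~R + s' * (h (n + 1)%:~R - h n%:~R)) =
          (s - s') * (h (n + 1)%:~R - h n%:~R) by ring.
by rewrite normrM mulrC; apply: ler_wpM2r => //; apply: normr_ge0.
Qed.

End Basic.

End P2.
Import P2.

Module P3.

Definition refl (P m p : nat) : nat := if odd m then (P.-1 - p)%N else p.

Lemma refl_lt P m p : (p < P)%N -> (refl P m p < P)%N.
Proof. by rewrite /refl; case: (odd m) => H //; lia. Qed.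

Lemma refl_invol P m p : (p < P)%N -> refl P m (refl P m p) = p.
Proof. by rewrite /refl; case: (odd m) => H //; lia. Qed.

Lemma divmod_eq (P m p : nat) : (p < P)%N -> ((m * P + p) %/ P = m /\ (m * P + p) %% P = p)%N.
Proof.
move=> H; have HP : (0 < P)%N by lia.
by rewrite divnMDl // divn_small // addn0 modnMDl modn_small.
Qed.

Definition zzn (P K n : nat) : nat :=
  if (n < K * P)%N then refl P (n %/ P) (n %% P) else (if odd K then P.-1 else 0%N).

Lemma zzn_le P K n : (0 < P)%N -> (zzn P K n <= P.-1)%N.
Proof.
move=> HP; rewrite /zzn /refl; case: ifP => _; last by case: ifP => //; lia.
have := ltn_pmod n HP; case: ifP => _; lia.
Qed.

Lemma zzn_walk P K n : (0 < P)%N ->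
  [/\ (zzn P K n.+1 <= (zzn P K n).+1)%N, (zzn P K n <= (zzn P K n.+1).+1)%N &
      (zzn P K n.+1 != zzn P K n -> (n.+1 < K * P)%N /\ (n.+1 %% P != 0)%N)].
Proof.
move=> HP.
have Hn := divn_eq n P; have Hp := ltn_pmod n HP.
set m := (n %/ P)%N in Hn *; set p := (n %% P)%N in Hn Hp *.
case: (ltnP n.+1 (K * P)) => HK.
  have HnK : (n < K * P)%N by lia.
  have Hm : (m < K)%N.
    by rewrite ltn_divLR //; apply: HnK.
  case: (ltnP p.+1 P) => Hp1.
    have [E1 E2] := divmod_eq m Hp1.
    rewrite /zzn HK HnK.
    have -> : n.+1 = (m * P + p.+1)%N by lia.
    rewrite E1 E2 -/m -/p; split; rewrite /refl; try (case: (odd m); lia).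
  have Ep : p = P.-1 by lia.
  have [E1 E2] := divmod_eq m.+1 HP.
  have E : n.+1 = (m.+1 * P + 0)%N by lia.
  have Hz : zzn P K n.+1 = zzn P K n.
    rewrite /zzn HK HnK E E1 E2 -/m -/p /refl Ep /=.
    by case: (odd m) => /=; lia.
  by rewrite Hz eqxx; split => //; lia.
case: (ltnP n (K * P)) => HnK.
  have EK : n.+1 = (K * P)%N by lia.
  have HK1 : (0 < K)%N by case: (K) HK HnK => //.
  have Em : m = K.-1.
    by apply/eqP; rewrite eqn_leq; apply/andP; split;
      [rewrite -ltnS prednK // ltn_divLR //|rewrite leq_divRL //]; lia.
  have Ep : p = P.-1 by nia.
  have Hz : zzn P K n.+1 = zzn P K n.
    have HK2 : (n.+1 < K * P)%N = false by rewrite ltnNge HK.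
    rewrite /zzn HnK HK2 /refl -/m -/p Em Ep.
    by case: (K) HK1 => // k _ /=; case: (odd k) => /=; lia.
  by rewrite Hz eqxx; split => //; lia.
have Hz : zzn P K n.+1 = zzn P K n.
  by rewrite /zzn ltnNge HK /= ltnNge HnK.
by rewrite Hz eqxx; split => //; lia.
Qed.

Section Zig.
Variable R : realType.

Definition clampf (Q v : R) : R := relu v - relu (v - Q).

Lemma clampf_0 Q v : 0 <= Q -> v <= 0 -> clampf Q v = 0.
Proof. by move=> HQ Hv; rewrite /clampf !relu_0 ?subrr //; lra. Qed.

Lemma clampf_id Q v : 0 <= v -> v <= Q -> clampf Q v = v.
Proof. by move=> H1 H2; rewrite /clampf relu_id // relu_0 ?subr0 //; lra. Qed.

Lemma clampf_sat Q v : 0 <= Q -> Q <= v -> clampf Q v = Q.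
Proof. by move=> H1 H2; rewrite /clampf !relu_id; lra. Qed.

Definition zz (P K : nat) (v : R) : R :=
  \sum_(m < K) (-1) ^+ m * clampf (P.-1)%:R (v - (m * P)%:R).

Lemma zz_neg P K v : v <= 0 -> zz P K v = 0.
Proof.
move=> Hv; rewrite /zz big1 // => m _.
by rewrite clampf_0 ?mulr0 ?ler0n //; have := ler0n R (m * P); lra.
Qed.

Lemma sign_odd (k : nat) : (-1) ^+ k = (if odd k then -1 else 1 : R).
Proof. by rewrite -signr_odd; case: (odd k); rewrite ?expr1 ?expr0. Qed.

Lemma zz_sat P K v : (0 < P)%N -> ((K * P).-1)%:R <= v ->
  zz P K v = (if odd K then P.-1 else 0%N)%:R.
Proof.
move=> HP; elim: K v => [|K IH] v Hv; first by rewrite /zz big_ord0.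
rewrite /zz big_ord_recr /= -/(zz P K v) IH; last first.
  apply: le_trans Hv; rewrite ler_nat; nia.
rewrite clampf_sat ?ler0n //; last first.
  rewrite lerBrDr -natrD; apply: le_trans Hv; rewrite ler_nat; nia.
rewrite sign_odd; case: (odd K) => /=; rewrite ?mulN1r ?mul1r ?add0r ?subrr //.
Qed.

Lemma zz_val P K m p : (0 < P)%N -> (m < K)%N -> (p < P)%N ->
  zz P K (m * P + p)%:R = (refl P m p)%:R.
Proof.
move=> HP; elim: K m => [//|K IH] m Hm Hp.
rewrite /zz big_ord_recr /= -/(zz P K _).
case: (ltnP m K) => HmK.
  rewrite IH // clampf_0 ?ler0n ?mulr0 ?addr0 //.
  rewrite subr_le0 ler_nat; nia.
have Em : m = K by lia.
rewrite zz_sat //; last by rewrite ler_nat Em; nia.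
have E : (K * P + p)%:R - (K * P)%:R = p%:R :> R by rewrite natrD; ring.
rewrite Em E clampf_id ?ler0n ?ler_nat //; last by lia.
rewrite sign_odd /refl.
case: (odd K) => /=; last by rewrite mul1r add0r.
by rewrite natrB ?mulN1r //; lia.
Qed.

Lemma zz_nat P K n : (0 < P)%N -> zz P K n%:R = (zzn P K n)%:R.
Proof.
move=> HP; rewrite /zzn; case: ifP => H.
  rewrite {1}(divn_eq n P) zz_val ?ltn_pmod //.
  by rewrite ltn_divLR.
by rewrite zz_sat // ler_nat; lia.
Qed.

Lemma zz_int P K (u : int) : (0 < P)%N ->
  zz P K u%:~R = (if (u <= 0)%R then 0%N else zzn P K `|u|%N)%:R.
Proof.
move=> HP; case: ifP => H.
  by rewrite zz_neg // lerz0.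
have -> : u = (`|u|%N)%:Z by lia.
by rewrite zz_nat.
Qed.

End Zig.

End P3.
Import P3.

Module P4.

Section Construction.
Variable R : realType.
Variables (L W : nat) (theta : nat -> bool).

Definition RL := (L * W)%N.
Definition CL := (RL * W)%N.

Definition aa c m : R := (c * CL + m * RL)%:R.
Definition Tc c (x : R) : R := zz RL W (x - (c * CL)%:R).
Definition lam c m (x : R) : R := rampf (x - aa c m + 1).
Definition rho c m (x : R) : R := lam c m x - lam c m.+1 x.
Definition bet c t (x : R) : R := rampf (Tc c x - (t * L)%:R + 1).

Definition pos c m k i : nat := (c * CL + m * RL + refl RL m (k * L + refl L k i))%N.
Definition abit c m k i : R := (theta (pos c m k i))%:R.
Definition V c m k : R := \sum_(i < L) abit c m k i * (2 ^+ i.+1)^-1.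
Definition dd c t m : R := V c m t - (if t is t'.+1 then V c m t' else 0).
Definition Dd c t (x : R) : R := \sum_(m < W) dd c t m * rho c m x.
Definition Gf (D s : R) : R := relu (D + 2 * s - 1) - s.
Definition gc c (x : R) : R := \sum_(t < W) Gf (Dd c t x) (bet c t x).
Definition yy (x : R) : R := \sum_(c < L) gc c x.

Definition Zz (v : R) : R := zz L W v.
Definition EE : R := Zz (zz RL W CL%:R).
Definition bz c (x : R) : R := Zz (Tc c x) - EE * lam c W x.
Definition bb (x : R) : R := \sum_(c < L) bz c x.

Definition bitK j (v : R) : R := rampf (2 ^+ j * (v - 2^-1) + 1).
Definition eqf s (v : R) : R := rampf (v - s%:R + 1) - rampf (v - s%:R).

Fixpoint outB (bf : R -> R) j s (z : R -> R) : R -> R :=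
  match j with
  | 0 => fun _ => 0
  | j'.+1 => fun x => relu (bitK j (z x) + eqf s (bf x) - 1) +
        outB bf j' s.+1 (fun x => 2 * z x - bitK j (z x)) x
  end.

Definition phi : R -> R := outB bb L 0 yy.

Lemma outB_ext bf bf' j s z z' : (forall x, bf x = bf' x) -> (forall x, z x = z' x) ->
  forall x, outB bf j s z x = outB bf' j s z' x.
Proof.
move=> Eb; elim: j s z z' => [//|j IH] s z z' Ez x /=.
rewrite Eb Ez; congr (_ + _); apply: IH => y; by rewrite Ez.
Qed.

Local Notation fn := (R -> R).

Definition Tneur c : seq fn :=
  map (fun m x => relu (x - (c * CL)%:R - (m * RL)%:R)) (iota 0 W) ++
  map (fun m x => relu (x - (c * CL)%:R - (m * RL)%:R - (RL.-1)%:R)) (iota 0 W).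

Lemma Span_x_gen (F : seq fn) : Span F (fun x => x) -> forall k, Span F (fun x => x + k).
Proof. by move=> H k; apply: Span_add => //; apply: Span_const. Qed.

Lemma Neurons_Tneur (F : seq fn) c : Span F (fun x => x) -> Neurons F (Tneur c).
Proof.
move=> Hx; apply: Neurons_cat; apply: Neurons_map => m _.
  by apply: (Span_ext (h := fun x => x + (- (c * CL)%:R - (m * RL)%:R))) => [x|]; [ring|apply: Span_x_gen].
by apply: (Span_ext (h := fun x => x + (- (c * CL)%:R - (m * RL)%:R - (RL.-1)%:R))) => [x|];
  [ring|apply: Span_x_gen].
Qed.

Lemma nthf_mapcat (f : nat -> fn) n (G : seq fn) j :
  nthf (map f (iota 0 n) ++ G) (n + j) = nthf G j.
Proof. by have := nthf_catr (map f (iota 0 n)) G j; rewrite size_map size_iota. Qed.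

Lemma Span_Tc c : Span (Tneur c) (Tc c).
Proof.
apply: (Span_ext (h := fun x => \sum_(m < W) ((-1) ^+ m * nthf (Tneur c) m x
   + (- (-1) ^+ m) * nthf (Tneur c) (W + m) x))).
  move=> x; rewrite /Tc /zz; apply: eq_bigr => m _.
  rewrite /Tneur nthf_catl ?size_map ?size_iota // (nthf_map_iota _ (ltn_ord m)).
  rewrite nthf_mapcat (nthf_map_iota _ (ltn_ord m)).
  rewrite /clampf; ring.
apply: (@Span_sum _ _ W (fun m x => (-1) ^+ m * nthf (Tneur c) m x
   + (- (-1) ^+ m) * nthf (Tneur c) (W + m) x)) => m Hm; apply: Span_add; apply: Span_scale; apply: Span_nth;
  rewrite /Tneur size_cat !size_map !size_iota; lia.
Qed.

Lemma Span_mapl (f : nat -> fn) n (G : seq fn) m : (m < n)%N -> Span (map f (iota 0 n) ++ G) (f m).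
Proof. by move=> H; apply: Span_catl; apply: Span_map. Qed.

Lemma Span_mapr (f : nat -> fn) n (G : seq fn) m : (m < n)%N -> Span (G ++ map f (iota 0 n)) (f m).
Proof. by move=> H; apply: Span_catr; apply: Span_map. Qed.


Lemma Span_pair (f g : nat -> fn) n m : (m < n)%N ->
  Span (map f (iota 0 n) ++ map g (iota 0 n)) (fun x => f m x - g m x).
Proof. by move=> H; apply: Span_sub; [apply: Span_mapl|apply: Span_mapr]. Qed.

Lemma Neurons_pair (F : seq fn) (a b : nat -> fn) n :
  (forall m, (m < n)%N -> Span F (a m)) -> (forall m, (m < n)%N -> Span F (b m)) ->
  Neurons F (map (fun m x => relu (a m x)) (iota 0 n) ++ map (fun m x => relu (b m x)) (iota 0 n)).
Proof. by move=> Ha Hb; apply: Neurons_cat; apply: Neurons_map. Qed.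

Definition lamN c : seq fn :=
  map (fun m x => relu (x - aa c m + 1)) (iota 0 W.+1) ++
  map (fun m x => relu (x - aa c m + 1 - 1)) (iota 0 W.+1).

Lemma Neurons_lamN (F : seq fn) c : Span F (fun x => x) -> Neurons F (lamN c).
Proof.
move=> Hx; apply: (@Neurons_pair F (fun m x => x - aa c m + 1) (fun m x => x - aa c m + 1 - 1))
  => m _.
  by apply: (Span_ext (h := fun x => x + (- aa c m + 1))) => [x|]; [ring|apply: Span_x_gen].
by apply: (Span_ext (h := fun x => x + (- aa c m + 1 - 1))) => [x|]; [ring|apply: Span_x_gen].
Qed.

Lemma Span_lam c m : (m < W.+1)%N -> Span (lamN c) (lam c m).
Proof. by move=> H; apply: (Span_pair (fun m x => relu (x - aa c m + 1)) (fun m x => relu (x - aa c m + 1 - 1)) H). Qed.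

Definition betN c : seq fn :=
  map (fun t x => relu (Tc c x - (t * L)%:R + 1)) (iota 0 W) ++
  map (fun t x => relu (Tc c x - (t * L)%:R + 1 - 1)) (iota 0 W).

Lemma Neurons_betN (F : seq fn) c : Span F (Tc c) -> Neurons F (betN c).
Proof.
move=> HT; apply: (@Neurons_pair F (fun t x => Tc c x - (t * L)%:R + 1)
   (fun t x => Tc c x - (t * L)%:R + 1 - 1)) => m _.
  by apply: (Span_ext (h := fun x => Tc c x + (- (m * L)%:R + 1))) => [x|];
    [ring|apply: Span_add => //; apply: Span_const].
by apply: (Span_ext (h := fun x => Tc c x + (- (m * L)%:R + 1 - 1))) => [x|];
  [ring|apply: Span_add => //; apply: Span_const].
Qed.

Lemma Span_bet c t : (t < W)%N -> Span (betN c) (bet c t).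
Proof. by move=> H; apply: (Span_pair (fun t x => relu (Tc c x - (t * L)%:R + 1)) (fun t x => relu (Tc c x - (t * L)%:R + 1 - 1)) H). Qed.

Definition ZzN c : seq fn :=
  map (fun k x => relu (Tc c x - (k * L)%:R)) (iota 0 W) ++
  map (fun k x => relu (Tc c x - (k * L)%:R - (L.-1)%:R)) (iota 0 W).

Lemma Neurons_ZzN (F : seq fn) c : Span F (Tc c) -> Neurons F (ZzN c).
Proof.
move=> HT; apply: (@Neurons_pair F (fun k x => Tc c x - (k * L)%:R)
   (fun k x => Tc c x - (k * L)%:R - (L.-1)%:R)) => m _.
  by apply: (Span_ext (h := fun x => Tc c x + (- (m * L)%:R))) => [x|];
    [ring|apply: Span_add => //; apply: Span_const].
by apply: (Span_ext (h := fun x => Tc c x + (- (m * L)%:R - (L.-1)%:R))) => [x|];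
  [ring|apply: Span_add => //; apply: Span_const].
Qed.

Lemma Span_ZzTc c : Span (ZzN c) (fun x => Zz (Tc c x)).
Proof.
apply: (Span_ext (h := fun x => \sum_(k < W) (-1) ^+ k *
  ((fun k x => relu (Tc c x - (k * L)%:R)) k x - (fun k x => relu (Tc c x - (k * L)%:R - (L.-1)%:R)) k x))).
  by move=> x; rewrite /Zz /zz; apply: eq_bigr => k _.
apply: (@Span_sum _ _ W (fun k x => (-1) ^+ k *
  ((fun k x => relu (Tc c x - (k * L)%:R)) k x - (fun k x => relu (Tc c x - (k * L)%:R - (L.-1)%:R)) k x)))
  => k Hk.
apply: Span_scale; exact: (Span_pair (fun k x => relu (Tc c x - (k * L)%:R)) (fun k x => relu (Tc c x - (k * L)%:R - (L.-1)%:R)) Hk).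
Qed.

Definition Pl c (accY accB : fn) : seq fn :=
  pass (fun x => x) ++ lamN c ++ betN c ++ ZzN c ++ pass accY ++ pass accB.

Lemma size_pass (h : fn) : size (pass h) = 2%N. Proof. by []. Qed.

Lemma size_Pl c accY accB : size (Pl c accY accB) = (6 * W + 8)%N.
Proof. rewrite /Pl !size_cat !size_map !size_iota /=; lia. Qed.

Lemma Neurons_Pl (F : seq fn) c accY accB : Span F (fun x => x) -> Span F (Tc c) ->
  Span F accY -> Span F accB -> Neurons F (Pl c accY accB).
Proof.
move=> Hx HT HY HB; rewrite /Pl.
apply: Neurons_cat; first by apply: Neurons_pass.
apply: Neurons_cat; first by apply: Neurons_lamN.
apply: Neurons_cat; first by apply: Neurons_betN.
apply: Neurons_cat; first by apply: Neurons_ZzN.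
by apply: Neurons_cat; apply: Neurons_pass.
Qed.

Definition gateN c : seq fn := map (fun t x => relu (Dd c t x + 2 * bet c t x - 1)) (iota 0 W).

Definition Ql c (accY accB : fn) : seq fn :=
  gateN c ++ pass (fun x => accY x - \sum_(t < W) bet c t x) ++ pass (fun x => x) ++
  Tneur c.+1 ++ pass (fun x => accB x + bz c x).

Lemma size_Ql c accY accB : size (Ql c accY accB) = (3 * W + 6)%N.
Proof. rewrite /Ql /Tneur !size_cat !size_map !size_iota /=; lia. Qed.

Section PSpan.
Variables (c : nat) (accY accB : fn).
Let P := Pl c accY accB.
Lemma SP_x : Span P (fun x => x).
Proof. by apply: Span_catl; apply: Span_pass. Qed.
Lemma SP_lam m : (m < W.+1)%N -> Span P (lam c m).
Proof. by move=> H; apply: Span_catr; apply: Span_catl; apply: Span_lam. Qed.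
Lemma SP_bet t : (t < W)%N -> Span P (bet c t).
Proof. by move=> H; do 2 apply: Span_catr; apply: Span_catl; apply: Span_bet. Qed.
Lemma SP_Zz : Span P (fun x => Zz (Tc c x)).
Proof. by do 3 apply: Span_catr; apply: Span_catl; apply: Span_ZzTc. Qed.
Lemma SP_Y : Span P accY.
Proof. by do 4 apply: Span_catr; apply: Span_catl; apply: Span_pass. Qed.
Lemma SP_B : Span P accB.
Proof. by do 5 apply: Span_catr; apply: Span_pass. Qed.
Lemma SP_Dd t : (t < W)%N -> Span P (fun x => Dd c t x + 2 * bet c t x - 1).
Proof.
move=> Ht; apply: Span_sub; last by apply: Span_const.
apply: Span_add; last by apply: Span_scale; apply: SP_bet.
apply: (@Span_sum _ _ W (fun m x => dd c t m * rho c m x)) => m Hm.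
by apply: Span_scale; apply: Span_sub; apply: SP_lam; lia.
Qed.
End PSpan.

Lemma Neurons_Ql c accY accB : Neurons (Pl c accY accB) (Ql c accY accB).
Proof.
rewrite /Ql; apply: Neurons_cat.
  apply: (@Neurons_map _ _ (fun t x => Dd c t x + 2 * bet c t x - 1)) => t Ht.
  by apply: SP_Dd.
apply: Neurons_cat.
  apply: Neurons_pass; apply: Span_sub; first by apply: SP_Y.
  by apply: (@Span_sum _ _ W (fun t x => bet c t x)) => t Ht; apply: SP_bet.
apply: Neurons_cat; first by apply: Neurons_pass; apply: SP_x.
apply: Neurons_cat; first by apply: Neurons_Tneur; apply: SP_x.
apply: Neurons_pass; apply: Span_add; first by apply: SP_B.
by apply: Span_sub; [apply: SP_Zz|apply: Span_scale; apply: SP_lam].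
Qed.

Section QSpan.
Variables (c : nat) (accY accB : fn).
Let Q := Ql c accY accB.
Lemma SQ_x : Span Q (fun x => x).
Proof. by do 2 apply: Span_catr; apply: Span_catl; apply: Span_pass. Qed.
Lemma SQ_T : Span Q (Tc c.+1).
Proof. by do 3 apply: Span_catr; apply: Span_catl; apply: Span_Tc. Qed.
Lemma SQ_B : Span Q (fun x => accB x + bz c x).
Proof. by do 4 apply: Span_catr; apply: Span_pass. Qed.
Lemma SQ_Y : Span Q (fun x => accY x + gc c x).
Proof.
apply: (Span_ext (h := fun x => (accY x - \sum_(t < W) bet c t x) +
   \sum_(t < W) relu (Dd c t x + 2 * bet c t x - 1))).
  move=> x; rewrite /gc /Gf [X in _ = _ + X]sumrB; ring.
apply: Span_add; first by apply: Span_catr; apply: Span_catl; apply: Span_pass.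
apply: (@Span_sum _ _ W (fun t x => relu (Dd c t x + 2 * bet c t x - 1))) => t Ht.
by apply: Span_catl; apply: (Span_map (fun t x => relu (Dd c t x + 2 * bet c t x - 1))).
Qed.
End QSpan.

Lemma Cont_ext w (F : seq fn) d (f g : fn) : (forall x, f x = g x) -> Cont w F d f -> Cont w F d g.
Proof.
move=> E; elim: d F => [|d IH] F /=; first by apply: Span_ext.
by move=> [G [H1 [H2 H3]]]; exists G; split => //; split => //; apply: IH.
Qed.

Lemma Neurons_cons (F : seq fn) h G : Span F h -> Neurons F G ->
  Neurons F ((fun x => relu (h x)) :: G).
Proof. by move=> H1 H2; apply: (@Neurons_cat _ F [:: _] G) => //; apply: Neurons_one. Qed.

Definition Bl j s (bf z acc h : fn) : seq fn :=
  pass z ++ [:: fun x => relu (2 ^+ j.+1 * (z x - 2^-1) + 1);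
               fun x => relu (2 ^+ j.+1 * (z x - 2^-1) + 1 - 1)] ++
  pass bf ++ [:: fun x => relu (bf x - s%:R + 1); fun x => relu (bf x - s%:R + 1 - 1);
                 fun x => relu (bf x - s%:R); fun x => relu (bf x - s%:R - 1)] ++
  pass acc ++ [:: fun x => relu (h x)].

Lemma stageB w (bf : fn) : (13 <= w)%N -> forall j s (F : seq fn) z acc h,
  Span F z -> Span F bf -> Span F acc -> Span F h ->
  Cont w F j.+1 (fun x => acc x + relu (h x) + outB bf j s z x).
Proof.
move=> Hw; elim=> [|j IH] s F z acc h Hz Hb Ha Hh.
  exists (pass acc ++ [:: fun x => relu (h x)]); split; first by rewrite size_cat /=; lia.
  split; first by apply: Neurons_cat; [apply: Neurons_pass|apply: Neurons_one].
  apply: (Span_ext (h := fun x => (nthf (pass acc ++ [:: fun x => relu (h x)]) 0 x -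
     nthf (pass acc ++ [:: fun x => relu (h x)]) 1 x) + nthf (pass acc ++ [:: fun x => relu (h x)]) 2 x)).
    by move=> x; rewrite /nthf /= relu_pass addr0.
  by apply: Span_add; [apply: Span_sub|]; apply: Span_nth.
set G := Bl j s bf z acc h.
have SG i : (i < 13)%N -> Span G (nthf G i) by move=> Hi; apply: Span_nth.
exists G; split; first by rewrite /G /Bl.
split.
  rewrite /G /Bl; apply: Neurons_cat; first by apply: Neurons_pass.
  apply: Neurons_cons; first by apply: Span_add; [apply: Span_scale; apply: Span_sub => //; apply: Span_const|apply: Span_const].
  apply: Neurons_cons; first by apply: Span_sub; [apply: Span_add; [apply: Span_scale; apply: Span_sub => //; apply: Span_const|apply: Span_const]|apply: Span_const].
  apply: Neurons_cat; first by apply: Neurons_pass.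
  apply: Neurons_cons; first by apply: Span_add; [apply: Span_sub => //|]; apply: Span_const.
  apply: Neurons_cons; first by apply: Span_sub; [apply: Span_add; [apply: Span_sub => //|]|]; apply: Span_const.
  apply: Neurons_cons; first by apply: Span_sub => //; apply: Span_const.
  apply: Neurons_cons; first by apply: Span_sub; [apply: Span_sub => //|]; apply: Span_const.
  apply: Neurons_cat; first by apply: Neurons_pass.
  by apply: Neurons_one.
have Hz' : Span G (fun x => 2 * z x - bitK j.+1 (z x)).
  apply: (Span_ext (h := fun x => 2 * (nthf G 0 x - nthf G 1 x) - (nthf G 2 x - nthf G 3 x))).
    by move=> x; rewrite /nthf /G /Bl /= relu_pass /bitK /rampf.
  by apply: Span_sub; [apply: Span_scale; apply: Span_sub|apply: Span_sub]; apply: SG.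
have Hb' : Span G bf.
  apply: (Span_ext (h := fun x => nthf G 4 x - nthf G 5 x)).
    by move=> x; rewrite /nthf /G /Bl /= relu_pass.
  by apply: Span_sub; apply: SG.
have Ha' : Span G (fun x => acc x + relu (h x)).
  apply: (Span_ext (h := fun x => (nthf G 10 x - nthf G 11 x) + nthf G 12 x)).
    by move=> x; rewrite /nthf /G /Bl /= relu_pass.
  by apply: Span_add; [apply: Span_sub|]; apply: SG.
have Hh' : Span G (fun x => bitK j.+1 (z x) + eqf s (bf x) - 1).
  apply: (Span_ext (h := fun x => (nthf G 2 x - nthf G 3 x) +
     ((nthf G 6 x - nthf G 7 x) - (nthf G 8 x - nthf G 9 x)) - 1)).
    by move=> x; rewrite /nthf /G /Bl /= /bitK /eqf /rampf.
  apply: Span_sub; last by apply: Span_const.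
  by apply: Span_add; [apply: Span_sub|apply: Span_sub; apply: Span_sub]; apply: SG.
have := IH s.+1 G _ _ _ Hz' Hb' Ha' Hh'.
apply: Cont_ext => x /=; ring.
Qed.

Lemma chunk w : (6 * W + 8 <= w)%N -> (13 <= w)%N -> forall k c (F : seq fn) accY accB,
  Span F (fun x => x) -> Span F (Tc c) -> Span F accY -> Span F accB ->
  Cont w F (2 * k + L + 1) (outB (fun x => accB x + \sum_(i < k) bz (c + i) x) L 0
                               (fun x => accY x + \sum_(i < k) gc (c + i) x)).
Proof.
move=> Hw1 Hw2; elim=> [|k IH] c F accY accB Hx HT HY HB.
  rewrite muln0 add0n addn1.
  have := stageB Hw2 L 0 HY HB (Span_const F 0) (Span_const F (-1)).
  apply: Cont_ext => x; rewrite relu_0 ?add0r ?addr0; last by lra.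
  by apply: outB_ext => y; rewrite big_ord0 addr0.
have -> : (2 * k.+1 + L + 1 = (2 * k + L + 1).+2)%N by lia.
exists (Pl c accY accB); split; first by rewrite size_Pl.
split; first by apply: Neurons_Pl.
exists (Ql c accY accB); split; first by rewrite size_Ql; lia.
split; first by apply: Neurons_Ql.
have := IH c.+1 _ _ _ (SQ_x c accY accB) (SQ_T c accY accB) (SQ_Y c accY accB) (SQ_B c accY accB).
apply: Cont_ext => x; apply: outB_ext => y.
  have E : \sum_(i < k) bz (c.+1 + i) y = \sum_(i < k) bz (c + lift ord0 i) y.
    by apply: eq_bigr => i _; rewrite /= addSnnS.
  rewrite big_ord_recl addn0 -E /bz; ring.
have E : \sum_(i < k) gc (c.+1 + i) y = \sum_(i < k) gc (c + lift ord0 i) y.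
  by apply: eq_bigr => i _; rewrite /= addSnnS.
rewrite big_ord_recl addn0 -E; ring.
Qed.

Lemma phi_Cont : (2 <= W)%N -> Cont (8 * W + 4) [:: id] (3 * L + 2) phi.
Proof.
move=> HW.
have Sx : Span [:: (id : fn)] (fun x => x).
  by apply: (Span_ext (h := nthf [:: (id : fn)] 0)) => //; apply: Span_nth.
have -> : (3 * L + 2 = (3 * L + 1).+1)%N by lia.
exists (pass (fun x => x) ++ Tneur 0); split.
  by rewrite size_cat /Tneur size_cat !size_map !size_iota /=; lia.
split; first by apply: Neurons_cat; [apply: Neurons_pass|apply: Neurons_Tneur].
have := @chunk (8 * W + 4) ltac:(lia) ltac:(lia) L 0 _ (fun _ => 0) (fun _ => 0)
  (Span_catl _ (Span_pass _)) (Span_catr _ (Span_Tc 0)) (Span_const _ 0) (Span_const _ 0).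
have -> : (2 * L + L + 1 = 3 * L + 1)%N by lia.
apply: Cont_ext => x; rewrite /phi; apply: outB_ext => y.
  by rewrite add0r /bb; apply: eq_bigr => i _; rewrite add0n.
by rewrite add0r /yy; apply: eq_bigr => i _; rewrite add0n.
Qed.

End Construction.

End P4.
Import P4.

Module P5.

Section Gen.
Variable R : realType.

Lemma tele_ord (g : nat -> R) K : \sum_(m < K) (g m - g m.+1) = g 0%N - g K.
Proof. elim: K => [|K IH]; first by rewrite big_ord0 subrr. by rewrite big_ord_recr IH /=; ring. Qed.

Lemma sum_le1 K (f : 'I_K -> R) : (forall i, 0 <= f i <= 1) ->
  (forall i j, f i != 0 -> f j != 0 -> i = j) -> \sum_i f i <= 1.
Proof.
move=> H1 H2; case: (boolP [exists i, f i != 0]) => [/existsP [i0 Hi0]|].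
  rewrite (bigD1 i0) //= big1 ?addr0; first by case/andP: (H1 i0).
  move=> j Hj; apply/eqP; apply: contraR Hj => Hj.
  by rewrite (H2 _ _ Hj Hi0) eqxx.
rewrite negb_exists => /forallP H.
by rewrite big1 ?ler01 // => i _; move: (H i); rewrite negbK => /eqP.
Qed.

Lemma sum_leM K (f : 'I_K -> R) M : 0 <= M -> (forall i, 0 <= f i <= M) ->
  (forall i j, f i != 0 -> f j != 0 -> i = j) -> \sum_i f i <= M.
Proof.
move=> HM H1 H2; case: (boolP [exists i, f i != 0]) => [/existsP [i0 Hi0]|].
  rewrite (bigD1 i0) //= big1 ?addr0; first by case/andP: (H1 i0).
  move=> j Hj; apply/eqP; apply: contraR Hj => Hj.
  by rewrite (H2 _ _ Hj Hi0) eqxx.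
rewrite negb_exists => /forallP H.
by rewrite big1 // => i _; move: (H i); rewrite negbK => /eqP.
Qed.

Lemma natrZ (k : nat) : (k%:R : R) = (k%:Z)%:~R.
Proof. by []. Qed.

Lemma Gf_bit (D : R) (b : bool) : -1 <= D -> D <= 1 -> Gf D b%:R = b%:R * D.
Proof.
move=> H1 H2; rewrite /Gf; case: b => /=.
  by rewrite relu_id ?mul1r; lra.
by rewrite relu_0 ?mul0r ?subr0 //; lra.
Qed.

Lemma Gf_lip (D a b : R) : `|Gf D a - Gf D b| <= `|a - b|.
Proof.
rewrite /Gf; case: (lerP a b) => Hab;
case: (relu_cases (D + 2 * a - 1)) => [[Ha ->]|[Ha ->]];
case: (relu_cases (D + 2 * b - 1)) => [[Hb ->]|[Hb ->]];
rewrite ler_norml; apply/andP; split; lra.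
Qed.

End Gen.

Lemma zzn_0 P K : (0 < P)%N -> (0 < K)%N -> zzn P K 0 = 0%N.
Proof. move=> HP HK; rewrite /zzn muln_gt0 HP HK div0n mod0n /refl /=. by []. Qed.

Section Ana.
Variable R : realType.
Variables (L W : nat) (theta : nat -> bool).
Hypothesis HL : (0 < L)%N.
Hypothesis HW : (0 < W)%N.
Local Notation RL := (RL L W).
Local Notation CL := (CL L W).
Local Notation aa := (aa R L W).
Local Notation Tc := (@Tc R L W).
Local Notation lam := (@lam R L W).
Local Notation rho := (@rho R L W).
Local Notation bet := (@bet R L W).
Local Notation V := (V R L W theta).
Local Notation dd := (dd R L W theta).
Local Notation Dd := (@Dd R L W theta).
Local Notation gc := (@gc R L W theta).
Local Notation yy := (@yy R L W theta).
Local Notation Zz := (@Zz R L W).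
Local Notation EE := (EE R L W).
Local Notation bz := (@bz R L W).
Local Notation bb := (@bb R L W).

Lemma RL_gt0 : (0 < RL)%N. Proof. rewrite /P4.RL; nia. Qed.
Lemma CL_eq : CL = (W * RL)%N. Proof. by rewrite /P4.CL mulnC. Qed.

Definition tcv c (n : int) : nat :=
  if (n - (c * CL)%:Z <= 0)%R then 0%N else zzn RL W `|(n - (c * CL)%:Z)%R|%N.

Lemma Tc_int c (n : int) : Tc c n%:~R = (tcv c n)%:R :> R.
Proof.
rewrite /P4.Tc /tcv -(zz_int _ _ _ RL_gt0); congr zz.
by rewrite intrB.
Qed.

Lemma tcv_le c n : (tcv c n <= RL.-1)%N.
Proof. by rewrite /tcv; case: ifP => _ //; apply: zzn_le; apply: RL_gt0. Qed.

Lemma tcv_walk c (n : int) :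
  [/\ (tcv c (n + 1) <= (tcv c n).+1)%N, (tcv c n <= (tcv c (n + 1)).+1)%N &
      tcv c (n + 1) != tcv c n -> exists k : nat, (n - (c * CL)%:Z = k%:Z)%R /\
         (k.+1 < W * RL)%N /\ (k.+1 %% RL != 0)%N].
Proof.
have HRL := RL_gt0.
rewrite /tcv; move: (c * CL)%N => z.
case: (lerP (n - z%:Z) (-1)) => Hu.
  rewrite ifT; last by lia.
  rewrite ifT; last by lia.
  by split => //; rewrite eqxx.
have [k Ek] : exists k : nat, (n - z%:Z)%R = k%:Z.
  by exists `|(n - z%:Z)%R|%N; lia.
have E1 : (n + 1 - z%:Z)%R = k.+1%:Z by lia.
rewrite Ek E1 (_ : (k.+1%:Z <= 0)%R = false); last by apply/negP; lia.
have -> : `|k.+1%:Z|%N = k.+1 by [].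
have -> : (if (k%:Z <= 0)%R then 0%N else zzn RL W `|k%:Z|%N) = zzn RL W k.
  case: ifP => // Hk; have -> : k = 0%N by lia.
  by rewrite zzn_0.
have [W1 W2 W3] := zzn_walk W k HRL.
split => // /W3 [H1 H2]; exists k; split => //.
Qed.

Lemma lam_int c m (n : int) :
  lam c m n%:~R = if ((c * CL + m * RL)%:Z <= n)%R then 1 else 0.
Proof.
rewrite /P4.lam /P4.aa.
have -> : n%:~R - (c * CL + m * RL)%:R + 1 = (n - (c * CL + m * RL)%:Z + 1)%:~R :> R.
  by rewrite intrD intrB.
rewrite rampf_int; congr (if _ then _ else _); apply/idP/idP; lia.
Qed.

Lemma bet_int c t (n : int) : bet c t n%:~R = if (t * L <= tcv c n)%N then 1 else 0.
Proof.
rewrite /P4.bet Tc_int.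
have -> : (tcv c n)%:R - (t * L)%:R + 1 = ((tcv c n)%:Z - (t * L)%:Z + 1)%:~R :> R.
  by rewrite intrD intrB.
rewrite rampf_int; congr (if _ then _ else _); apply/idP/idP; lia.
Qed.

Lemma walk_xk (k : int) : walk (fun x : R => x + k%:~R).
Proof.
move=> n; exists (n + k)%R, (n + 1 + k)%R; rewrite !intrD; split => //; lia.
Qed.

Lemma PA_xk (k : int) : PA (fun x : R => x + k%:~R).
Proof. by apply: PA_add; [apply: PA_id|apply: PA_const]. Qed.

Lemma PA_relu_xk (k : int) : PA (fun x : R => relu (x + k%:~R)).
Proof. by apply: PA_relu_walk; [apply: PA_xk|apply: walk_xk]. Qed.

Lemma PA_relu_hk h (k : int) : PA h -> walk h -> PA (fun x : R => relu (h x + k%:~R)).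
Proof. by move=> H1 H2; apply: PA_relu_walk; [apply: PA_add => //; apply: PA_const|apply: walk_shift]. Qed.

Lemma PA_lam c m : PA (lam c m).
Proof.
rewrite /P4.lam /rampf.
apply: PA_sub.
  apply: (PA_ext (h := fun x => relu (x + (- (c * CL + m * RL)%:Z + 1)%:~R))).
    by move=> x; rewrite /P4.aa; congr relu; rewrite ?intrD ?intrB ?intrN -?natrZ; ring.
  exact: PA_relu_xk.
apply: (PA_ext (h := fun x => relu (x + (- (c * CL + m * RL)%:Z)%:~R))).
  by move=> x; rewrite /P4.aa; congr relu; rewrite ?intrD ?intrB ?intrN -?natrZ; ring.
exact: PA_relu_xk.
Qed.

Lemma walk_Tc c : walk (Tc c).
Proof.
move=> n; exists (tcv c n)%:Z, (tcv c (n + 1))%:Z; rewrite !Tc_int.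
have [H1 H2 _] := tcv_walk c n.
by split => //; lia.
Qed.

Lemma PA_Tc c : PA (Tc c).
Proof.
rewrite /P4.Tc /zz.
apply: (@PA_sum _ W (fun m x => (-1) ^+ m * clampf (RL.-1)%:R (x - (c * CL)%:R - (m * RL)%:R))) => m _.
apply: PA_scale; rewrite /clampf; apply: PA_sub.
  apply: (PA_ext (h := fun x => relu (x + (- (c * CL)%:Z - (m * RL)%:Z)%:~R))).
    by move=> x; congr relu; rewrite ?intrD ?intrB ?intrN -?natrZ; ring.
  exact: PA_relu_xk.
apply: (PA_ext (h := fun x => relu (x + (- (c * CL)%:Z - (m * RL)%:Z - (RL.-1)%:Z)%:~R))).
  by move=> x; congr relu; rewrite ?intrD ?intrB ?intrN -?natrZ; ring.
exact: PA_relu_xk.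
Qed.

Lemma PA_bet c t : PA (bet c t).
Proof.
rewrite /P4.bet /rampf; apply: PA_sub.
  apply: (PA_ext (h := fun x => relu (Tc c x + (- (t * L)%:Z + 1)%:~R))).
    by move=> x; congr relu; rewrite ?intrD ?intrB ?intrN -?natrZ; ring.
  by apply: PA_relu_hk; [apply: PA_Tc|apply: walk_Tc].
apply: (PA_ext (h := fun x => relu (Tc c x + (- (t * L)%:Z)%:~R))).
  by move=> x; congr relu; rewrite ?intrD ?intrB ?intrN -?natrZ; ring.
by apply: PA_relu_hk; [apply: PA_Tc|apply: walk_Tc].
Qed.

Lemma PA_ZzTc c : PA (fun x => Zz (Tc c x)).
Proof.
rewrite /P4.Zz /zz.
apply: (@PA_sum _ W (fun k x => (-1) ^+ k * clampf (L.-1)%:R (Tc c x - (k * L)%:R))) => k _.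
apply: PA_scale; rewrite /clampf; apply: PA_sub.
  apply: (PA_ext (h := fun x => relu (Tc c x + (- (k * L)%:Z)%:~R))).
    by move=> x; congr relu; rewrite ?intrD ?intrB ?intrN -?natrZ; ring.
  by apply: PA_relu_hk; [apply: PA_Tc|apply: walk_Tc].
apply: (PA_ext (h := fun x => relu (Tc c x + (- (k * L)%:Z - (L.-1)%:Z)%:~R))).
  by move=> x; congr relu; rewrite ?intrD ?intrB ?intrN -?natrZ; ring.
by apply: PA_relu_hk; [apply: PA_Tc|apply: walk_Tc].
Qed.

Lemma PA_bb : PA bb.
Proof.
rewrite /P4.bb.
apply: (@PA_sum _ L (fun c x => bz c x)) => c _.
rewrite /P4.bz; apply: PA_sub; first by apply: PA_ZzTc.
by apply: PA_scale; apply: PA_lam.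
Qed.

Lemma PA_Dd c t : PA (Dd c t).
Proof.
rewrite /P4.Dd.
apply: (@PA_sum _ W (fun m x => dd c t m * rho c m x)) => m _.
by apply: PA_scale; apply: PA_sub; apply: PA_lam.
Qed.

Lemma geo j : \sum_(i < j) (2 ^+ i.+1)^-1 = 1 - (2 ^+ j)^-1 :> R.
Proof.
elim: j => [|j IH]; first by rewrite big_ord0 expr0 invr1 subrr.
rewrite big_ord_recr /= IH exprS.
have H : (2 ^+ j : R) != 0 by rewrite expf_neq0 // pnatr_eq0.
by field.
Qed.

Lemma pow2_gt0 j : (0 : R) < 2 ^+ j.
Proof. by apply: exprn_gt0; lra. Qed.

Lemma bit_range (b : bool) : 0 <= (b%:R : R) <= 1.
Proof. by case: b => /=; apply/andP; split; lra. Qed.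

Lemma V_range c m k : 0 <= V c m k <= 1.
Proof.
apply/andP; split.
  apply: sumr_ge0 => i _; apply: mulr_ge0; first by case/andP: (bit_range (theta (pos L W c m k i))).
  by rewrite invr_ge0 ltW // pow2_gt0.
apply: (@le_trans _ _ (\sum_(i < L) (2 ^+ i.+1)^-1)).
  apply: ler_sum => i _; rewrite -[X in _ <= X]mul1r; apply: ler_wpM2r.
    by rewrite invr_ge0 ltW // pow2_gt0.
  by case/andP: (bit_range (theta (pos L W c m k i))).
rewrite geo; have := pow2_gt0 L; rewrite -invr_gt0; lra.
Qed.

Lemma dd_range c t m : -1 <= dd c t m <= 1.
Proof.
rewrite /P4.dd; have := V_range c m t; case: t => [|t] /=.
  by move=> /andP [H1 H2]; apply/andP; split; lra.
by have := V_range c m t => /andP [H1 H2] /andP [H3 H4]; apply/andP; split; lra.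
Qed.

Lemma lam_range c m x : 0 <= lam c m x <= 1.
Proof. by rewrite /P4.lam rampf_ge0 rampf_le1. Qed.

Lemma rho_ge0 c m x : 0 <= rho c m x.
Proof.
rewrite /P4.rho subr_ge0 /P4.lam; apply: rampf_mono.
rewrite /P4.aa; have : ((c * CL + m * RL)%:R : R) <= (c * CL + m.+1 * RL)%:R.
  by rewrite ler_nat; nia.
lra.
Qed.

Lemma sum_rho c x : \sum_(m < W) rho c m x = lam c 0 x - lam c W x.
Proof. by rewrite /P4.rho (tele_ord (fun m => lam c m x)). Qed.

Lemma lam_chain c x : lam c W x = lam c.+1 0 x.
Proof.
by rewrite /P4.lam /P4.aa; congr (rampf (_ - _%:R + 1)); rewrite /P4.CL; nia.
Qed.

Lemma sum_rho_all x : \sum_(c < L) \sum_(m < W) rho c m x = lam 0 0 x - lam L 0 x.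
Proof.
under eq_bigr => c _ do rewrite sum_rho lam_chain.
by rewrite (tele_ord (fun c => lam c 0 x)).
Qed.

Lemma sum_rho_le1 x : \sum_(c < L) \sum_(m < W) rho c m x <= 1.
Proof. rewrite sum_rho_all; have := lam_range 0 0 x; have := lam_range L 0 x; move=> /andP[? ?] /andP[? ?]; lra. Qed.

Lemma Dd_range c t x : -1 <= Dd c t x <= 1.
Proof.
have Hs : \sum_(m < W) rho c m x <= 1.
  rewrite sum_rho; have := lam_range c 0 x; have := lam_range c W x; move=> /andP[? ?] /andP[? ?]; lra.
apply/andP; split.
  apply: (@le_trans _ _ (- \sum_(m < W) rho c m x)); first by lra.
  rewrite -sumrN; apply: ler_sum => m _.
  have := dd_range c t m => /andP [H1 H2].
  rewrite -mulN1r; apply: ler_wpM2r => //; exact: rho_ge0.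
apply: le_trans Hs; apply: ler_sum => m _.
have := dd_range c t m => /andP [H1 H2].
rewrite -[X in _ <= X]mul1r; apply: ler_wpM2r => //; exact: rho_ge0.
Qed.

Lemma prefix_sum (f : nat -> R) q K :
  \sum_(t < K) (if (t <= q)%N then f t - (if nat_of_ord t is t'.+1 then f t' else 0) else 0) =
  if K is K'.+1 then f (minn K' q) else 0.
Proof.
elim: K => [|K IH]; first by rewrite big_ord0.
rewrite big_ord_recr /= IH.
case: K IH => [|K] IH /=.
  by rewrite min0n; ring.
case: (ltnP K q) => H.
  have -> : minn K.+1 q = K.+1 by lia.
  ring.
rewrite addr0; congr f; lia.
Qed.

Lemma prefix_sum2 (f : nat -> R) q K : (q < K)%N ->
  \sum_(t < K) (if (t <= q)%N then f t - (if nat_of_ord t is t'.+1 then f t' else 0) else 0) = f q.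
Proof. by rewrite prefix_sum; case: K => // K H; congr f; lia. Qed.

Lemma gc_int c (n : int) :
  gc c n%:~R = \sum_(m < W) rho c m n%:~R * V c m (tcv c n %/ L).
Proof.
have Hq : (tcv c n %/ L < W)%N.
  rewrite ltn_divLR //; have := tcv_le c n; rewrite /P4.RL; have := RL_gt0; rewrite /P4.RL; nia.
rewrite /P4.gc.
have E : forall t : 'I_W, Gf (Dd c t n%:~R) (bet c t n%:~R) =
    (if (t <= tcv c n %/ L)%N then 1 else 0) * Dd c t n%:~R.
  move=> t; rewrite bet_int leq_divRL //.
  have := Dd_range c t n%:~R => /andP [H1 H2].
  case: ifP => _; [have := Gf_bit true H1 H2|have := Gf_bit false H1 H2]; by [].
rewrite (eq_bigr _ (fun t _ => E t)) /P4.Dd.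
under eq_bigr => t _ do rewrite mulr_sumr.
rewrite exchange_big /=; apply: eq_bigr => m _.
rewrite -(prefix_sum2 (fun t => V c m t) Hq) mulr_sumr; apply: eq_bigr => t _.
rewrite /P4.dd; case: ifP => _; ring.
Qed.

Lemma yy_int (n : int) : yy n%:~R =
  \sum_(c < L) \sum_(m < W) rho c m n%:~R * V c m (tcv c n %/ L).
Proof. by rewrite /P4.yy; apply: eq_bigr => c _; rewrite gc_int. Qed.

Lemma yy_range (n : int) : 0 <= yy n%:~R <= 1.
Proof.
rewrite yy_int; apply/andP; split.
  apply: sumr_ge0 => c _; apply: sumr_ge0 => m _; apply: mulr_ge0; first exact: rho_ge0.
  by case/andP: (V_range c m (tcv c n %/ L)).
apply: le_trans (sum_rho_le1 n%:~R); apply: ler_sum => c _; apply: ler_sum => m _.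
rewrite -[X in _ <= X]mulr1; apply: ler_wpM2l; first exact: rho_ge0.
by case/andP: (V_range c m (tcv c n %/ L)).
Qed.

Lemma bet_PA_const c t (n : int) s : 0 <= s -> s <= 1 ->
  bet c t (n + 1)%:~R = bet c t n%:~R -> bet c t (n%:~R + s) = bet c t n%:~R.
Proof. by move=> H1 H2 E; rewrite PA_bet // E subrr mulr0 addr0. Qed.

Lemma yy_caseA (n : int) : (forall c t, bet c t (n + 1)%:~R = bet c t n%:~R) ->
  forall s, 0 <= s -> s <= 1 ->
  yy (n%:~R + s) = yy n%:~R + s * (yy (n + 1)%:~R - yy n%:~R).
Proof.
move=> HA.
pose Y x := \sum_(c < L) \sum_(t < W) bet c t n%:~R * Dd c t x.
have E : forall s, 0 <= s -> s <= 1 -> yy (n%:~R + s) = Y (n%:~R + s).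
  move=> s H1 H2; rewrite /P4.yy /Y; apply: eq_bigr => c _; rewrite /P4.gc; apply: eq_bigr => t _.
  rewrite bet_PA_const // bet_int.
  have := Dd_range c t (n%:~R + s) => /andP [D1 D2].
  by case: ifP => _; [have := Gf_bit true D1 D2|have := Gf_bit false D1 D2].
have PY : PA Y.
  apply: (@PA_sum _ L (fun c x => \sum_(t < W) bet c t n%:~R * Dd c t x)) => c _.
  apply: (@PA_sum _ W (fun t x => bet c t n%:~R * Dd c t x)) => t _.
  by apply: PA_scale; apply: PA_Dd.
have E0 : yy n%:~R = Y n%:~R by have := E 0 (lexx _) ler01; rewrite addr0.
have I1 : ((n + 1)%:~R : R) = n%:~R + 1 by rewrite intrD.
have E1 : yy (n + 1)%:~R = Y (n + 1)%:~R by rewrite I1; apply: E; lra.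
move=> s H1 H2; rewrite E // PY // E0 E1 //.
Qed.

Lemma dbet_le1 (n : int) :
  \sum_(c < L) \sum_(t < W) `|bet c t (n + 1)%:~R - bet c t n%:~R| <= 1.
Proof.
have HRL := RL_gt0.
apply: sum_leM; first by lra.
- move=> c; apply/andP; split; first by apply: sumr_ge0 => t _; apply: normr_ge0.
  case: (boolP (tcv c (n + 1) == tcv c n)) => [/eqP Ec|Nc].
    by rewrite big1 ?ler01 // => t _; rewrite !bet_int Ec subrr normr0.
  have [W1 W2 _] := tcv_walk c n.
  apply: sum_leM; first by lra.
    move=> t; apply/andP; split; first by apply: normr_ge0.
    by rewrite !bet_int; do 2 case: ifP => _; rewrite ?subrr ?normr0 ?subr0 ?sub0r ?normrN ?normr1 ?ler01.
  move=> t1 t2; rewrite !bet_int.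
  case: ifP => A1; case: ifP => B1; rewrite ?subrr ?normr0 ?eqxx // => _;
  case: ifP => A2; case: ifP => B2; rewrite ?subrr ?normr0 ?eqxx // => _;
  apply: val_inj => /=; nia.
move=> c1 c2.
have key : forall c, \sum_(t < W) `|bet c t (n + 1)%:~R - bet c t n%:~R| != 0 ->
    exists k : nat, (n - (c * CL)%:Z = k%:Z)%R /\ (k.+1 < W * RL)%N.
  move=> c Hc; have [_ _ W3] := tcv_walk c n.
  case: (boolP (tcv c (n + 1) == tcv c n)) => [/eqP Ec|Nc].
    by move: Hc; rewrite big1 ?eqxx // => t _; rewrite !bet_int Ec subrr normr0.
  by have [k [Hk1 [Hk2 _]]] := W3 Nc; exists k.
move=> /key [k1 [E1 F1]] /key [k2 [E2 F2]].
apply: val_inj => /=; move: F1 F2; rewrite -CL_eq => F1 F2.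
have HCL : (0 < CL)%N by rewrite CL_eq; nia.
move: E1 E2; move: (CL) HCL F1 F2 => Z HZ F1 F2 E1 E2; nia.
Qed.

Lemma F1_lam (n : int) c0 m0 : lam c0 m0 (n + 1)%:~R != lam c0 m0 n%:~R ->
  forall c, tcv c (n + 1) = tcv c n.
Proof.
have HRL := RL_gt0.
rewrite !lam_int => Hl.
have En : (n + 1 = (c0 * CL + m0 * RL)%:Z)%R.
  by move: Hl; do 2 case: ifP => //; try (rewrite eqxx //); lia.
move=> c; apply/eqP; apply: contraT => Nc.
have [_ _ W3] := tcv_walk c n.
have [k [Ek [_ Hk]]] := W3 Nc.
have E2 : (c * W * RL + k.+1 = (c0 * W + m0) * RL)%N.
  have : (k.+1%:Z + (c * CL)%:Z = (c0 * CL + m0 * RL)%:Z)%R by lia.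
  rewrite CL_eq; lia.
move: Hk; have := modnMDl (c * W) k.+1 RL; rewrite E2 modnMl => <-.
by rewrite eqxx.
Qed.

Lemma LU_yy : LU yy 1.
Proof.
move=> n s s' H1 H2 H3 H4; rewrite mul1r.
case: (Classical_Prop.classic (exists c m, (m < W.+1)%N /\ lam c m (n + 1)%:~R != lam c m n%:~R)).
  move=> [c0 [m0 [_ Hl]]].
  have HA : forall c t, bet c t (n + 1)%:~R = bet c t n%:~R.
    by move=> c t; rewrite !bet_int (F1_lam Hl).
  rewrite !yy_caseA //.
  have -> : yy n%:~R + s * (yy (n + 1)%:~R - yy n%:~R) -
            (yy n%:~R + s' * (yy (n + 1)%:~R - yy n%:~R)) =
            (s - s') * (yy (n + 1)%:~R - yy n%:~R) by ring.
  rewrite normrM -[X in _ <= X]mulr1; apply: ler_wpM2l; first exact: normr_ge0.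
  have := yy_range n; have := yy_range (n + 1) => /andP [? ?] /andP [? ?].
  rewrite ler_norml; apply/andP; split; lra.
move=> HB.
have HB' : forall c m, (m < W.+1)%N -> forall s, 0 <= s -> s <= 1 -> lam c m (n%:~R + s) = lam c m n%:~R.
  move=> c m Hm u U1 U2; rewrite PA_lam //.
  have : ~~ (lam c m (n + 1)%:~R != lam c m n%:~R) by apply/negP => Hn; apply: HB; exists c, m.
  by rewrite negbK => /eqP ->; rewrite subrr mulr0 addr0.
have HD : forall c t u, 0 <= u -> u <= 1 -> Dd c t (n%:~R + u) = Dd c t n%:~R.
  move=> c t u U1 U2; rewrite /P4.Dd; apply: eq_bigr => m _.
  have Hm := ltn_ord m; rewrite /P4.rho !HB' //; lia.
rewrite /P4.yy -sumrB.
apply: le_trans (ler_norm_sum _ _ _) _.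
apply: (@le_trans _ _ (\sum_(c < L) \sum_(t < W) `|s - s'| * `|bet c t (n + 1)%:~R - bet c t n%:~R|)).
  apply: ler_sum => c _; rewrite /P4.gc -sumrB.
  apply: le_trans (ler_norm_sum _ _ _) _; apply: ler_sum => t _.
  rewrite !HD //; apply: le_trans (Gf_lip _ _ _) _.
  rewrite !PA_bet //.
  have -> : bet c t n%:~R + s * (bet c t (n + 1)%:~R - bet c t n%:~R) -
            (bet c t n%:~R + s' * (bet c t (n + 1)%:~R - bet c t n%:~R)) =
            (s - s') * (bet c t (n + 1)%:~R - bet c t n%:~R) by ring.
  by rewrite normrM.
under eq_bigr => c _ do rewrite -mulr_sumr.
rewrite -mulr_sumr -[X in _ <= X]mulr1; apply: ler_wpM2l; first exact: normr_ge0.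
exact: dbet_le1.
Qed.

End Ana.

End P5.
Import P5.

Module P6.

Section Ana2.
Variable R : realType.
Variables (L W : nat) (theta : nat -> bool).
Hypothesis HL : (0 < L)%N.
Hypothesis HW : (0 < W)%N.
Local Notation RL := (RL L W).
Local Notation CL := (CL L W).
Local Notation Tc := (@Tc R L W).
Local Notation lam := (@lam R L W).
Local Notation rho := (@rho R L W).
Local Notation V := (V R L W theta).
Local Notation yy := (@yy R L W theta).
Local Notation Zz := (@Zz R L W).
Local Notation EE := (EE R L W).
Local Notation bz := (@bz R L W).
Local Notation bb := (@bb R L W).
Local Notation tcv := (@tcv L W).

Lemma CLp : (0 < CL)%N.
Proof. rewrite CL_eq; have := RL_gt0 HL HW; nia. Qed.

Lemma ZzTc_int c (n : int) : Zz (Tc c n%:~R) = (zzn L W (tcv c n))%:R.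
Proof. by rewrite /P4.Zz (Tc_int R HL HW) zz_nat. Qed.

Definition satv : nat := if odd W then RL.-1 else 0%N.

Lemma EE_val : EE = (zzn L W satv)%:R.
Proof.
rewrite /P4.EE /P4.Zz zz_nat ?(RL_gt0 HL HW) // zz_nat //.
by rewrite /zzn -CL_eq ltnn /satv.
Qed.

Lemma lamW_int c (n : int) : lam c W n%:~R = if ((c.+1 * CL)%:Z <= n)%R then 1 else 0.
Proof.
rewrite (lam_int R HL HW); congr (if _ then _ else _).
by rewrite CL_eq mulSn; congr (_ <= _)%R; congr Posz; rewrite -CL_eq; ring.
Qed.

Lemma bz_int c (n : int) :
  bz c n%:~R = if ((c * CL)%:Z <= n)%R && (n < (c.+1 * CL)%:Z)%R
               then (zzn L W (tcv c n))%:R else 0.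
Proof.
have HRL := RL_gt0 HL HW; have HCL := CLp.
rewrite /P4.bz ZzTc_int lamW_int.
case: (lerP (c.+1 * CL)%:Z n) => H2; rewrite mulSn in H2.
  rewrite andbF mulr1 EE_val /P5.tcv ifF; last by apply/negbTE; rewrite -ltNge; lia.
  have Hs : zzn RL W `|(n - (c * CL)%:Z)%R|%N = satv.
    rewrite /zzn /satv ifF //; apply/negbTE; rewrite -leqNgt -CL_eq; lia.
  by rewrite Hs subrr.
rewrite andbT mulr0 subr0; case: ifP => // H1.
rewrite /P5.tcv ifT; last by lia.
rewrite zzn_0 //; nia.
Qed.

Lemma bb_range (n : int) : 0 <= bb n%:~R <= (L.-1)%:R.
Proof.
have HCL := CLp.
rewrite /P4.bb; apply/andP; split.
  by apply: sumr_ge0 => c _; rewrite bz_int; case: ifP => _; rewrite ?ler0n.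
apply: sum_leM; first by rewrite ler0n.
  move=> c; rewrite bz_int; case: ifP => _; rewrite ?lexx ?ler0n //.
  by rewrite ler_nat zzn_le.
move=> c1 c2; rewrite !bz_int.
case: ifP => [/andP [A1 A2]|]; last by rewrite eqxx.
case: ifP => [/andP [B1 B2]|]; last by rewrite eqxx.
move=> _ _; apply: val_inj => /=.
move: A1 A2 B1 B2; rewrite !mulSn; move: (CL) HCL => Z HZ; nia.
Qed.

Lemma LU_bb : LU bb L%:R.
Proof.
apply: PA_LU; first by rewrite ler0n.
  exact: PA_bb.
move=> n; have := bb_range n; have := bb_range (n + 1).
have : ((L.-1)%:R : R) <= L%:R by rewrite ler_nat; lia.
move=> H /andP [? ?] /andP [? ?]; rewrite ler_norml; apply/andP; split; lra.
Qed.

End Ana2.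

End P6.
Import P6.

Module P7.

Section Vals.
Variable R : realType.
Variables (L W : nat) (theta : nat -> bool).
Hypothesis HL : (0 < L)%N.
Hypothesis HW : (0 < W)%N.
Local Notation RL := (RL L W).
Local Notation CL := (CL L W).
Local Notation lam := (@lam R L W).
Local Notation rho := (@rho R L W).
Local Notation V := (V R L W theta).
Local Notation yy := (@yy R L W theta).
Local Notation bz := (@bz R L W).
Local Notation bb := (@bb R L W).
Local Notation tcv := (@tcv L W).

Variables (c0 m0 p : nat).
Hypotheses (Hc0 : (c0 < L)%N) (Hm0 : (m0 < W)%N) (Hp : (p < RL)%N).
Let n : nat := (c0 * CL + m0 * RL + p)%N.

Lemma key_le a b : (a * RL <= b * RL + p)%N = (a <= b)%N.
Proof. by apply/idP/idP => H; nia. Qed.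

Lemma n_eq : n = ((c0 * W + m0) * RL + p)%N.
Proof. by rewrite /n CL_eq; ring. Qed.

Lemma tcv_val : tcv c0 n = refl RL m0 p.
Proof.
have HRL := RL_gt0 HL HW.
rewrite /P5.tcv.
have -> : (n%:Z - (c0 * CL)%:Z)%R = (m0 * RL + p)%N%:Z by rewrite /n; lia.
case: ifP => H.
  have [-> ->] : m0 = 0%N /\ p = 0%N by nia.
  by [].
rewrite /zzn ifT; last by nia.
by have [-> ->] := divmod_eq m0 Hp.
Qed.

Lemma bb_val : bb n%:R = (zzn L W (refl RL m0 p))%:R.
Proof.
have HCL := CLp HL HW; have HRL := RL_gt0 HL HW.
rewrite natrZ /P4.bb (bigD1 (Ordinal Hc0)) //= big1 ?addr0.
  rewrite (bz_int R HL HW) ifT ?tcv_val //.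
  apply/andP; split; rewrite /n; first lia.
  rewrite CL_eq; nia.
move=> c Hc; rewrite (bz_int R HL HW) ifF //.
have Hc' : (c : nat) != c0 by apply: contra Hc => /eqP E; apply/eqP/val_inj.
apply/negbTE; rewrite negb_and -!ltNge -leNgt.
case: (ltnP c c0) => H.
  apply/orP; right; rewrite /n mulSn.
  have : (c.+1 * CL <= c0 * CL)%N by rewrite leq_pmul2r.
  rewrite mulSn; lia.
apply/orP; left; rewrite /n.
have : (c0.+1 * CL <= c * CL)%N by rewrite leq_pmul2r //; lia.
rewrite mulSn CL_eq; nia.
Qed.

Lemma rho_val c m : (m < W)%N ->
  rho c m n%:R = if (c == c0) && (m == m0) then 1 else 0.
Proof.
move=> Hm; have HRL := RL_gt0 HL HW.
rewrite natrZ /P4.rho !(lam_int R HL HW) !lez_nat.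
have E : forall k, (c * CL + k * RL <= n)%N = (c * W + k <= c0 * W + m0)%N.
  by move=> k; rewrite n_eq CL_eq -(key_le (c * W + k) (c0 * W + m0)) !mulnDl !mulnA.
rewrite !E.
case: (boolP ((c == c0) && (m == m0))) => [/andP [/eqP -> /eqP ->]|H].
  rewrite leqnn (_ : (c0 * W + m0.+1 <= c0 * W + m0)%N = false) ?subr0 //; apply/negbTE; lia.
case: (leqP (c * W + m) (c0 * W + m0)) => H1; last by rewrite ifF ?subrr //; lia.
rewrite ifT ?subrr //.
suff : (c * W + m != c0 * W + m0)%N by lia.
apply: contra H => /eqP E1.
have [E2 E3] := divmod_eq c Hm; have [E4 E5] := divmod_eq c0 Hm0.
rewrite E1 in E2 E3; rewrite -E2 -E3 E4 E5 !eqxx //.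
Qed.

Lemma yy_val : yy n%:R = V c0 m0 (refl RL m0 p %/ L).
Proof.
rewrite [n%:R]natrZ (yy_int R theta HL HW) -natrZ.
rewrite (bigD1 (Ordinal Hc0)) //=.
rewrite [X in _ + X]big1 ?addr0; last first.
  move=> c Hc; apply: big1 => m _; rewrite rho_val // ifF ?mul0r //.
  apply/negbTE; rewrite negb_and; apply/orP; left.
  by apply: contra Hc => /eqP E; apply/eqP/val_inj.
rewrite (bigD1 (Ordinal Hm0)) //=.
rewrite [X in _ + X]big1 ?addr0; last first.
  move=> m Hm; rewrite rho_val // eqxx /= ifF ?mul0r //.
  by apply/negbTE; apply: contra Hm => /eqP E; apply/eqP/val_inj.
by rewrite rho_val // !eqxx mul1r tcv_val.
Qed.

End Vals.

End P7.
Import P7.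

Module P8.

Section StageB.
Variable R : realType.

Lemma eqf_nat s q : eqf s (q%:R : R) = (q == s)%:R.
Proof.
rewrite /eqf natrZ.
have -> : (q%:Z)%:~R - s%:R + 1 = (q%:Z - s%:Z + 1)%:~R :> R by rewrite intrD intrB.
have -> : (q%:Z)%:~R - s%:R = (q%:Z - s%:Z)%:~R :> R by rewrite intrB.
rewrite !rampf_int.
have -> : (0 < q%:Z - s%:Z + 1)%R = (s <= q)%N by apply/idP/idP; lia.
have -> : (0 < q%:Z - s%:Z)%R = (s < q)%N by apply/idP/idP; lia.
case: (ltngtP q s) => H /=; rewrite ?subrr ?subr0 //.
Qed.

Lemma half_split j (a : nat -> bool) :
  \sum_(i < j.+1) (a i)%:R * (2 ^+ i.+1)^-1 =
  ((a 0%N)%:R + \sum_(i < j) (a i.+1)%:R * (2 ^+ i.+1)^-1) / 2 :> R.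
Proof.
rewrite big_ord_recl /= mulrDl; congr (_ + _).
rewrite mulr_suml; apply: eq_bigr => i _ /=.
have -> : bump 0 i = i.+1 by [].
rewrite exprS invfM; ring.
Qed.

Lemma sum_bits_range j (a : nat -> bool) :
  0 <= \sum_(i < j) ((a i)%:R * (2 ^+ i.+1)^-1 : R) <= 1 - (2 ^+ j)^-1.
Proof.
apply/andP; split.
  apply: sumr_ge0 => i _; apply: mulr_ge0; first by case/andP: (bit_range R (a i)).
  by rewrite invr_ge0 ltW // pow2_gt0.
rewrite -geo; apply: ler_sum => i _; rewrite -[X in _ <= X]mul1r; apply: ler_wpM2r.
  by rewrite invr_ge0 ltW // pow2_gt0.
by case/andP: (bit_range R (a i)).
Qed.

Lemma bitK_val j (a : nat -> bool) :
  bitK j.+1 (\sum_(i < j.+1) (a i)%:R * (2 ^+ i.+1)^-1 : R) = (a 0%N)%:R.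
Proof.
rewrite half_split /bitK.
set r := \sum_(i < j) _.
have := sum_bits_range j (fun i => a i.+1); rewrite -/r => /andP [H1 H2].
have Hp := pow2_gt0 R j.
have E : 2 ^+ j.+1 * (((a 0%N)%:R + r) / 2 - 2^-1) + 1 = 2 ^+ j * ((a 0%N)%:R + r - 1) + 1 :> R.
  by rewrite exprS; field.
rewrite E; case: (a 0%N) => /=.
  rewrite rampf_1 //; have : 0 <= 2 ^+ j * (1 + r - 1) :> R.
    by apply: mulr_ge0; lra.
  lra.
rewrite rampf_0 //.
have : 2 ^+ j * (0 + r - 1) <= 2 ^+ j * (- (2 ^+ j)^-1) :> R.
  by apply: ler_wpM2l; lra.
rewrite mulrN mulfV ?gt_eqF //; lra.
Qed.

Lemma shift_val j (a : nat -> bool) :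
  2 * (\sum_(i < j.+1) (a i)%:R * (2 ^+ i.+1)^-1) - (a 0%N)%:R =
  \sum_(i < j) (a i.+1)%:R * (2 ^+ i.+1)^-1 :> R.
Proof. by rewrite half_split; field. Qed.

Lemma outB_val (bf : R -> R) j : forall s (z : R -> R) x (a : nat -> bool) (q : nat),
  z x = \sum_(i < j) (a i)%:R * (2 ^+ i.+1)^-1 -> bf x = q%:R ->
  outB bf j s z x = \sum_(i < j) (if q == (s + i)%N then (a i)%:R else 0).
Proof.
elim: j => [|j IH] s z x a q Hz Hb /=; first by rewrite big_ord0.
rewrite (IH s.+1 _ x (fun i => a i.+1) q) ?Hb; last 2 first.
- by rewrite Hz bitK_val shift_val.
- by [].
rewrite Hz bitK_val eqf_nat big_ord_recl /= addn0; congr (_ + _).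
  case: (a 0%N); case: (q == s) => /=.
  - by rewrite relu_id; lra.
  - by rewrite relu_0; lra.
  - by rewrite relu_0; lra.
  - by rewrite relu_0; lra.
by apply: eq_bigr => i _; have -> : bump 0 i = i.+1 by []; rewrite addSnnS.
Qed.

Fixpoint Fn (j : nat) : nat := if j is j'.+1 then (2 ^ j + (2 + 2 ^ j) * Fn j')%N else 0%N.

Lemma Fn_bound j : (Fn j <= 2 ^ (j * j))%N.
Proof.
elim: j => [//|j IH].
have E : Fn j.+1 = (2 ^ j.+1 + (2 + 2 ^ j.+1) * Fn j)%N by [].
rewrite E.
case: (leqP j 1) => Hj.
  by case: j Hj IH E => [|[|//]].
have A : (2 + 2 ^ j.+1 <= 2 ^ j.+2)%N.
  by rewrite (expnS 2 j.+1); have := expn_gt0 2 j; rewrite expnS; lia.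
have B : ((2 + 2 ^ j.+1) * Fn j <= 2 ^ (j.+2 + j * j))%N.
  by rewrite expnD; apply: leq_mul.
have C : (2 ^ (j.+2 + j * j) <= 2 ^ (j.+1 * j.+1).-1)%N.
  by apply: leq_pexp2l => //; nia.
have D : (2 ^ j.+1 <= 2 ^ (j.+1 * j.+1).-1)%N.
  by apply: leq_pexp2l => //; nia.
have -> : (j.+1 * j.+1 = ((j.+1 * j.+1).-1).+1)%N by nia.
rewrite (expnS 2 (j.+1 * j.+1).-1); lia.
Qed.

Lemma lip_bitK k (z : R -> R) Cz : 0 <= Cz -> lip_le z Cz ->
  lip_le (fun x => bitK k (z x)) (2 ^+ k * Cz).
Proof.
move=> HC H; rewrite /bitK; apply: lip_rampf.
apply: (lip_ext (h := fun x => 2 ^+ k * (z x - 2^-1) + 1)) => // .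
apply: (lip_mono (C := `|2 ^+ k| * (Cz + 0) + 0)).
  by rewrite addr0 addr0 ger0_norm // ltW // pow2_gt0.
apply: lip_add; last by apply: lip_const.
by apply: lip_scale; apply: lip_sub => //; apply: lip_const.
Qed.

Lemma lip_eqf s (bf : R -> R) Cb : lip_le bf Cb -> lip_le (fun x => eqf s (bf x)) (2 * Cb).
Proof.
move=> H; rewrite /eqf.
apply: (lip_mono (C := Cb + Cb)); first by lra.
apply: lip_sub; apply: lip_rampf.
  apply: (lip_mono (C := Cb + 0 + 0)); first by lra.
  by apply: lip_add; [apply: lip_sub => //|]; apply: lip_const.
apply: (lip_mono (C := Cb + 0)); first by lra.
by apply: lip_sub => //; apply: lip_const.
Qed.

Lemma outB_lip (bf : R -> R) Cb j : 0 <= Cb -> lip_le bf Cb ->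
  forall s (z : R -> R) Cz, 0 <= Cz -> lip_le z Cz ->
  lip_le (outB bf j s z) ((Fn j)%:R * Cz + (2 * j)%:R * Cb).
Proof.
move=> HCb Hb; elim: j => [|j IH] s z Cz HCz Hz /=.
  apply: (lip_mono (C := 0)); first by rewrite !mul0r addr0.
  exact: lip_const.
have Hp := pow2_gt0 R j.+1.
have H1 : lip_le (fun x => relu (bitK j.+1 (z x) + eqf s (bf x) - 1)) (2 ^+ j.+1 * Cz + 2 * Cb).
  apply: lip_relu; apply: (lip_mono (C := 2 ^+ j.+1 * Cz + 2 * Cb + 0)); first by lra.
  apply: lip_sub; last by apply: lip_const.
  by apply: lip_add; [apply: lip_bitK|apply: lip_eqf].
have H2 : lip_le (fun x => 2 * z x - bitK j.+1 (z x)) ((2 + 2 ^+ j.+1) * Cz).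
  apply: (lip_mono (C := `|2| * Cz + 2 ^+ j.+1 * Cz)).
    by rewrite ger0_norm ?mulrDl //; lra.
  by apply: lip_sub; [apply: lip_scale|apply: lip_bitK].
have HC2 : 0 <= (2 + 2 ^+ j.+1) * Cz by apply: mulr_ge0; lra.
have H3 := IH s.+1 _ _ HC2 H2.
have H4 := lip_add H1 H3.
apply: (lip_mono _ H4).
have E : ((Fn j.+1)%:R : R) = 2 ^+ j.+1 + (2 + 2 ^+ j.+1) * (Fn j)%:R.
  by rewrite /= natrD natrM natrD natrX.
have E2 : ((2 * j.+1)%:R : R) = 2 + (2 * j)%:R by rewrite !natrM -natr1; ring.
rewrite E E2 le_eqVlt; apply/orP; left; apply/eqP; ring.
Qed.

End StageB.

End P8.
Import P8.


Lemma in_NN_mono (R : realType) w d d' (f : R -> R) : (d <= d')%N -> in_NN w d f -> in_NN w d' f.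
Proof. by move=> H [N [H1 H2 H3]]; exists N; split => //; apply: leq_trans H. Qed.

Unset Implicit Arguments.
Set Strict Implicit.

Theorem lemma30 (R : realType) (W L : nat) (theta : nat -> bool) :
  (6 <= W)%N -> (2 <= L)%N ->
  exists phi : R -> R,
    [/\ in_NN (8 * W + 4) (4 * L) phi,
        (forall i : nat, (i < W ^ 2 * L ^ 2)%N -> phi i%:R = (theta i)%:R)
      & lip_le phi (2 * 2 ^+ (L ^ 2) + (L ^ 2)%:R)].
Proof.
move=> HW6 HL2.
have HL : (0 < L)%N by lia.
have HW : (0 < W)%N by lia.
exists (@phi R L W theta); split.
- apply: (@in_NN_mono _ _ (3 * L + 2)); first by lia.
  by apply: Cont_in_NN; apply: phi_Cont; lia.
- move=> i Hi.
  have HRL := RL_gt0 HL HW; have HCL := CLp HL HW.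
  set c0 := (i %/ CL L W)%N; set r := (i %% CL L W)%N.
  set m0 := (r %/ RL L W)%N; set p := (r %% RL L W)%N.
  have Hc0 : (c0 < L)%N.
    rewrite /c0 ltn_divLR //; move: Hi; rewrite /P4.CL /P4.RL; nia.
  have Hr : (r < CL L W)%N by rewrite /r ltn_pmod.
  have Hm0 : (m0 < W)%N by rewrite /m0 ltn_divLR //; rewrite CL_eq in Hr.
  have Hp : (p < RL L W)%N by rewrite /p ltn_pmod.
  have Ei : i = (c0 * CL L W + m0 * RL L W + p)%N.
    by rewrite -addnA /m0 /p -divn_eq /c0 /r -divn_eq.
  set T := refl (RL L W) m0 p.
  have HT : (T < RL L W)%N by apply: refl_lt.
  set blk := (T %/ L)%N.
  set q := zzn L W T.
  have Eq : q = refl L blk (T %% L).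
    by rewrite /q /zzn ifT // mulnC; rewrite /P4.RL in HT.
  have Hq : (q < L)%N by rewrite Eq refl_lt // ltn_pmod.
  rewrite /phi.
  rewrite Ei (@outB_val R _ L 0 _ _ (fun k => theta (pos L W c0 m0 blk k)) q).
  + rewrite (bigD1 (Ordinal Hq)) //= big1 ?addr0.
      rewrite eqxx; congr (_%:R); congr theta.
      rewrite /pos Eq refl_invol ?ltn_pmod // mulnC -divn_eq /T refl_invol //.
    move=> k Hk; rewrite ifF //; apply/negbTE; apply: contra Hk => /eqP E.
    by apply/eqP/val_inj => /=.
  + by rewrite (yy_val R theta HL HW Hc0 Hm0 Hp).
  + by rewrite (bb_val R HL HW Hc0 Hm0 Hp).
- have Hy : lip_le (@yy R L W theta) 1 by apply: LU_lip; [lra|apply: LU_yy].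
  have Hb : lip_le (@bb R L W) L%:R by apply: LU_lip; [rewrite ler0n|apply: LU_bb].
  have := @outB_lip R (@bb R L W) L%:R L (ler0n R L) Hb 0 (@yy R L W theta) 1 ler01 Hy.
  apply: lip_mono.
  have E2 : (L ^ 2 = L * L)%N by rewrite expnS expn1.
  have F1 : ((Fn L)%:R : R) <= 2 ^+ (L ^ 2).
    by rewrite E2 -natrX ler_nat; apply: Fn_bound.
  have F2 : ((L ^ 2)%:R : R) <= 2 ^+ (L ^ 2).
    by rewrite -natrX ler_nat; apply: ltnW; apply: ltn_expl.
  have F3 : ((2 * L)%:R * L%:R : R) = 2 * (L ^ 2)%:R by rewrite -natrM E2 natrM natrM; ring.
  rewrite mulr1 F3; lra.
Qed.
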